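(* Let $\varepsilon\ge0$ and $\delta_0\in\mathbb R$ be such that \[ \inf_{[-\ell,\ell]}h_{\rm eq}-\varepsilon|\delta_0|>0\qquad\text{and}\qquad \varepsilon|\delta_0|<\tau_0(\varepsilon|\delta_0|)\,\frac{2r_0}{\ell}. \] Then there exists a unique global solution $\delta\in C^\infty(\mathbb R^+)$ of \[ \tau_0(\varepsilon\delta)^2\ddot\delta+\ell\dot\delta+\delta+\varepsilon\big(\tau_0(\varepsilon\delta)\tau_0'(\varepsilon\delta)+\gamma(\varepsilon\dot\delta)\big)\dot\delta^2=0 \] with initial condition $(\delta,\dot\delta)_{|t=0}=(\delta_0,0)$.
   Context: $\ell>0$, $\tau_{\rm buoy}>0$, $h_{\rm eq}$ a positive continuous even function on $[-\ell,\ell]$. For real $r$ with $h_{\rm eq}+r>0$, $\tau_0(r)=\big(\tau_{\rm buoy}^2+\frac1{2\ell}\int_{-\ell}^\ell\frac{x^2}{h_{\rm eq}(x)+r}dx\big)^{1/2}$ and $\tau_0'$ its derivative. $r_0=\frac4{27}$. For $r<r_0$, $\sigma_0(r)$ is the largest real root of $\sigma^3-\sigma^2+r=0$ (the real branch with $\sigma_0(0)=1$; the paper writes it by Cardano's formula $\sigma_0(r)=\frac13(1+C_-(r)+C_+(r))$, $C_\pm(r)=\frac32(-4r+2r_0\pm4\sqrt{r(r-r_0)})^{1/3}$). The function $\gamma$ is defined for $\ell y<2r_0$ by $y^2\gamma(y)=-(\sigma_0(\frac{\ell y}{2})-1)(3\sigma_0(\frac{\ell y}{2})-1)-\ell y$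 for $y\ne0$, and $\gamma(0)=\ell^2/4$; it is smooth. *)

(* Defs.v *)
From Stdlib Require Import Reals Lra.
From Coquelicot Require Import Coquelicot.
Open Scope R_scope.

Definition r0 : R := 4 / 27.

Definition tau0 (l tb : R) (h : R -> R) (r : R) : R :=
  sqrt (tb ^ 2 + / (2 * l) * RInt (fun x => x ^ 2 / (h x + r)) (- l) l).

Definition tau0' (l tb : R) (h : R -> R) (r : R) : R :=
  Derive (tau0 l tb h) r.

(* sigma_0(r) : largest real root of s^3 - s^2 + r = 0 (meaningful for r < r0) *)
Definition sigma0 (r : R) : R :=
  real (Lub_Rbar (fun s => s ^ 3 - s ^ 2 + r = 0)).

Definition gamma (l y : R) : R :=
  if Req_EM_T y 0 then l ^ 2 / 4
  else (- (sigma0 (l * y / 2) - 1) * (3 * sigma0 (l * y / 2) - 1) - l * y) / y ^ 2.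

Definition is_Rplus_deriv (f g : R -> R) : Prop :=
  (forall t, 0 < t -> is_derive f t (g t)) /\
  filterlim (fun t => (f t - f 0) / t) (at_right 0) (locally (g 0)).

Definition Cinf_Rplus (f : R -> R) : Prop :=
  exists d : nat -> R -> R,
    (forall t, 0 <= t -> d O t = f t) /\
    (forall n, is_Rplus_deriv (d n) (d (S n))).

(* delta is a global C^infinity solution on R^+ of
   tau0(eps d)^2 d'' + l d' + d + eps (tau0(eps d) tau0'(eps d) + gamma(eps d')) d'^2 = 0,
   (d, d')(0) = (d0, 0); the terms of the equation are required to be defined
   (h_eq + eps d > 0 on [-l,l], and l eps d' < 2 r0). *)
Definition is_global_solution (l tb : R) (h : R -> R) (eps d0 : R)
    (delta : R -> R) : Prop :=
  Cinf_Rplus delta /\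
  exists delta1 delta2 : R -> R,
    is_Rplus_deriv delta delta1 /\ is_Rplus_deriv delta1 delta2 /\
    delta 0 = d0 /\ delta1 0 = 0 /\
    forall t, 0 <= t ->
      (forall x, - l <= x <= l -> 0 < h x + eps * delta t) /\
      l * (eps * delta1 t) < 2 * r0 /\
      (tau0 l tb h (eps * delta t)) ^ 2 * delta2 t + l * delta1 t + delta t
      + eps * (tau0 l tb h (eps * delta t) * tau0' l tb h (eps * delta t)
               + gamma l (eps * delta1 t)) * (delta1 t) ^ 2 = 0.

(* Main.v *)
Require Import Defs.
From Stdlib Require Import Reals Lra Lia Psatz List.
From Coquelicot Require Import Coquelicot.
Open Scope R_scope.

Fixpoint Ck (k : nat) (U : R -> Prop) (f : R -> R) : Prop :=
  match k with
  | O => forall x, U x -> continuous f x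
  | S k => (forall x, U x -> ex_derive f x) /\ Ck k U (Derive f)
  end.

Definition Smooth U f := forall k, Ck k U f.

Lemma Ck_S_le k U f : Ck (S k) U f -> Ck k U f.
Proof.
  revert f; induction k as [|k IH]; intros f [H1 H2].
  - intros x Ux. apply (ex_derive_continuous (K:=R_AbsRing) (V:=R_NormedModule)). auto.
  - split; auto.
Qed.

Lemma Ck_le k m U f : (m <= k)%nat -> Ck k U f -> Ck m U f.
Proof.
  induction 1; auto. intros H0. apply IHle. now apply Ck_S_le.
Qed.

Lemma Ck_ext k U f g : open U -> (forall x, U x -> f x = g x) -> Ck k U f -> Ck k U g.
Proof.
  intros HU; revert f g; induction k as [|k IH]; intros f g Hfg Hf.
  - intros x Ux. apply continuous_ext_loc with f.
    + apply (locally_open U); auto; intros; symmetry; auto.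
    + auto.
  - destruct Hf as [H1 H2]. split.
    + intros x Ux. destruct (H1 x Ux) as [l Hl]. exists l.
      apply is_derive_ext_loc with f; auto.
      apply (locally_open U); auto.
    + apply IH with (Derive f); auto.
      intros x Ux. apply Derive_ext_loc. apply (locally_open U); auto.
Qed.

Lemma Ck_plus k U f g : open U -> Ck k U f -> Ck k U g -> Ck k U (fun x => f x + g x).
Proof.
  intros HU; revert f g; induction k as [|k IH]; intros f g Hf Hg.
  - intros x Ux. apply (continuous_plus f g); auto.
  - destruct Hf as [F1 F2], Hg as [G1 G2]. split.
    + intros x Ux. apply (ex_derive_plus f g); auto.
    + apply Ck_ext with (fun x => Derive f x + Derive g x); auto.
      intros x Ux. rewrite Derive_plus; auto.
Qed.

Lemma Ck_const k U c : Ck k U (fun _ => c).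
Proof.
  revert c; induction k as [|k IH]; intros c.
  - intros x _. apply continuous_const.
  - split. + intros; apply ex_derive_const.
    + replace (Derive (fun _ => c)) with (fun _ : R => 0). apply IH.
      apply FunctionalExtensionality.functional_extensionality; intros; now rewrite Derive_const.
Qed.

Lemma Ck_mult k U f g : open U -> Ck k U f -> Ck k U g -> Ck k U (fun x => f x * g x).
Proof.
  intros HU; revert f g; induction k as [|k IH]; intros f g Hf Hg.
  - intros x Ux. apply (continuous_mult f g); auto.
  - pose proof (Ck_S_le _ _ _ Hf) as Hf'. pose proof (Ck_S_le _ _ _ Hg) as Hg'.
    destruct Hf as [F1 F2], Hg as [G1 G2]. split.
    + intros x Ux. apply (ex_derive_mult f g); auto.
    + apply Ck_ext with (fun x => Derive f x * g x + f x * Derive g x); auto.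
      intros x Ux. rewrite Derive_mult; auto.
      apply Ck_plus; auto.
Qed.

Lemma Ck_id k U : Ck k U (fun x => x).
Proof.
  destruct k as [|k].
  - intros x _. apply continuous_id.
  - split. + intros; apply ex_derive_id.
    + replace (Derive (fun x => x)) with (fun _ : R => 1). apply Ck_const.
      apply FunctionalExtensionality.functional_extensionality; intros; now rewrite Derive_id.
Qed.

Lemma Ck_inv k U f : open U -> (forall x, U x -> f x <> 0) -> Ck k U f -> Ck k U (fun x => / f x).
Proof.
  intros HU Hnz; revert f Hnz; induction k as [|k IH]; intros f Hnz Hf.
  - intros x Ux. apply continuous_Rinv_comp; auto.
  - pose proof (Ck_S_le _ _ _ Hf) as Hf'. destruct Hf as [F1 F2]. split.
    + intros x Ux. apply ex_derive_inv; auto.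
    + apply Ck_ext with (fun x => - Derive f x * (/ f x * / f x)); auto.
      * intros x Ux. rewrite Derive_inv; auto. specialize (Hnz x Ux). field. auto.
      * apply Ck_mult; auto. apply Ck_ext with (fun x => (-1) * Derive f x); auto.
        intros; ring. apply Ck_mult; auto. apply Ck_const.
        apply Ck_mult; auto.
Qed.

Lemma Smooth_S U f : Smooth U f -> Smooth U (Derive f).
Proof. intros H k. exact (proj2 (H (S k))). Qed.

Lemma Ck_comp k U V a phi : open U -> (forall x, U x -> V (a x)) -> Smooth V phi ->
  Ck k U a -> Ck k U (fun x => phi (a x)).
Proof.
  intros HU HUV; revert phi; induction k as [|k IH]; intros phi Hphi Ha.
  - intros x Ux. apply (continuous_comp a phi); auto.
    apply (Hphi O); auto.
  - pose proof (Ck_S_le _ _ _ Ha) as Ha'. destruct Ha as [A1 A2]. split.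
    + intros x Ux. destruct (A1 x Ux) as [la Hla].
      destruct (proj1 (Hphi 1%nat) (a x) (HUV x Ux)) as [lp Hlp].
      exists (scal la lp). apply (is_derive_comp phi a); auto.
    + apply Ck_ext with (fun x => Derive phi (a x) * Derive a x); auto.
      * intros x Ux. destruct (A1 x Ux) as [la Hla].
        destruct (proj1 (Hphi 1%nat) (a x) (HUV x Ux)) as [lp Hlp].
        symmetry; apply is_derive_unique.
        rewrite (is_derive_unique _ _ _ Hla), (is_derive_unique _ _ _ Hlp).
        replace (lp * la) with (scal la lp) by (unfold scal; simpl; unfold mult; simpl; ring).
        apply (is_derive_comp phi a); auto.
      * apply Ck_mult; auto. apply IH; auto. apply Smooth_S; auto.
Qed.

Lemma Smooth_plus U f g : open U -> Smooth U f -> Smooth U g -> Smooth U (fun x => f x + g x).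
Proof. intros; intro k; apply Ck_plus; auto. Qed.
Lemma Smooth_mult U f g : open U -> Smooth U f -> Smooth U g -> Smooth U (fun x => f x * g x).
Proof. intros; intro k; apply Ck_mult; auto. Qed.
Lemma Smooth_const U c : Smooth U (fun _ => c).
Proof. intro k; apply Ck_const. Qed.
Lemma Smooth_id U : Smooth U (fun x => x).
Proof. intro k; apply Ck_id. Qed.
Lemma Smooth_inv U f : open U -> (forall x, U x -> f x <> 0) -> Smooth U f -> Smooth U (fun x => / f x).
Proof. intros; intro k; apply Ck_inv; auto. Qed.
Lemma Smooth_ext U f g : open U -> (forall x, U x -> f x = g x) -> Smooth U f -> Smooth U g.
Proof. intros; intro k; eapply Ck_ext; eauto. Qed.
Lemma Smooth_comp U V a phi : open U -> (forall x, U x -> V (a x)) -> Smooth V phi ->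
  Smooth U a -> Smooth U (fun x => phi (a x)).
Proof. intros; intro k; eapply Ck_comp; eauto. Qed.

Lemma Smooth_iter U f n : Smooth U f -> Smooth U (Nat.iter n Derive f).
Proof. induction n; simpl; auto. intros; apply Smooth_S; auto. Qed.

Lemma Smooth_is_derive U f x : Smooth U f -> U x -> is_derive f x (Derive f x).
Proof. intros H Ux. apply Derive_correct. apply (proj1 (H 1%nat)); auto. Qed.

Definition pcub r s := s ^ 3 - s ^ 2 + r.

Lemma pcub_incr r s1 s2 : 2/3 <= s1 -> s1 < s2 -> pcub r s1 < pcub r s2.
Proof.
  intros H1 H2. unfold pcub.
  set (a := s1 - 2/3). set (b := s2 - 2/3).
  assert (0 <= a) by (unfold a; lra). assert (a < b) by (unfold a, b; lra).
  replace s1 with (a + 2/3) by (unfold a; ring).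
  replace s2 with (b + 2/3) by (unfold b; ring).
  assert (0 < (b - a) * (a + b + a*a + a*b + b*b)).
  { apply Rmult_lt_0_compat. lra. nra. }
  nra.
Qed.

Lemma root_exists r : r < r0 -> exists s, 2/3 < s /\ pcub r s = 0.
Proof.
  intros Hr. unfold r0 in Hr.
  assert (Hc : continuity (pcub r)).
  { unfold pcub. intro x. apply continuity_pt_plus; [apply continuity_pt_minus|apply continuity_pt_const; intros ? ?; auto];
    apply derivable_continuous_pt; apply derivable_pt_pow. }
  destruct (IVT (pcub r) (2/3) (2 + Rabs r) Hc) as [z [Hz1 Hz2]].
  - pose proof (Rabs_pos r); lra.
  - unfold pcub. lra.
  - clear Hc. unfold pcub. assert (Ha : - r <= Rabs r) by (rewrite <- Rabs_Ropp; apply Rle_abs).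
    pose proof (Rabs_pos r).
    set (s := 2 + Rabs r) in *. assert (2 <= s) by (unfold s; lra). assert (-r <= s - 2) by (unfold s; lra). clearbody s.
    assert (K1 : 1 <= s * (s - 1)) by nra.
    assert (K2 : s ^ 3 - s ^ 2 = s * (s * (s - 1))) by ring.
    assert (K3 : s * 1 <= s * (s * (s - 1))) by (apply Rmult_le_compat_l; lra). lra.
  - exists z. split; auto. destruct (Req_dec z (2/3)) as [e|e]; [|lra].
    subst z. unfold pcub in Hz2. lra.
Qed.

Lemma root_unique r s1 s2 : 2/3 < s1 -> 2/3 < s2 -> pcub r s1 = 0 -> pcub r s2 = 0 -> s1 = s2.
Proof.
  intros. destruct (Rtotal_order s1 s2) as [h|[h|h]]; auto.
  - pose proof (pcub_incr r s1 s2). lra.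
  - pose proof (pcub_incr r s2 s1). lra.
Qed.

Lemma sigma0_spec r : r < r0 -> 2/3 < sigma0 r /\ pcub r (sigma0 r) = 0.
Proof.
  intros Hr. destruct (root_exists r Hr) as [s [Hs1 Hs2]].
  assert (Hl : Lub_Rbar (fun s => s ^ 3 - s ^ 2 + r = 0) = Finite s).
  { apply is_lub_Rbar_unique. split.
    - intros x Hx. simpl. destruct (Rle_dec x (2/3)). lra.
      right. apply (root_unique r); auto. lra.
    - intros b Hb. apply Hb. exact Hs2. }
  unfold sigma0. rewrite Hl. simpl. auto.
Qed.

Lemma sigma0_0 : sigma0 0 = 1.
Proof.
  destruct (sigma0_spec 0) as [H1 H2]. unfold r0; lra.
  apply (root_unique 0); auto. lra. unfold pcub; ring.
Qed.

Lemma sigma0_sign r : r < r0 -> (sigma0 r - 1) * r <= 0.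
Proof.
  intros Hr. destruct (sigma0_spec r Hr) as [H1 H2]. unfold pcub in H2.
  set (s := sigma0 r) in *. clearbody s.
  replace r with (- (s ^ 2 * (s - 1))) by lra.
  replace ((s - 1) * - (s ^ 2 * (s - 1))) with (- ((s * (s - 1)) ^ 2)) by ring.
  pose proof (pow2_ge_0 (s * (s - 1))). lra.
Qed.

Lemma sigma0_diff r1 r : r1 < r0 -> r < r0 ->
  (sigma0 r1 - sigma0 r) * (sigma0 r1 ^ 2 + sigma0 r1 * sigma0 r + sigma0 r ^ 2 - sigma0 r1 - sigma0 r)
  = - (r1 - r).
Proof.
  intros H1 H2. destruct (sigma0_spec r1 H1) as [_ A]. destruct (sigma0_spec r H2) as [_ B].
  unfold pcub in *. nra.
Qed.

Lemma sigma0_derive r : r < r0 ->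
  is_derive sigma0 r (- / (sigma0 r * (3 * sigma0 r - 2))).
Proof.
  intros Hr. apply is_derive_Reals. intros eps Heps.
  destruct (sigma0_spec r Hr) as [Hs _]. set (s := sigma0 r) in *.
  set (b := s - 2/3). assert (Hb : 0 < b) by (unfold b; lra).
  set (Q0 := s * (3 * s - 2)). assert (HQ0 : 0 < Q0) by (unfold Q0; nra).
  set (d := Rmin (Rmin b (r0 - r)) (eps * b * b * Q0 / (3 * s + 2))).
  assert (Hd : 0 < d).
  { unfold d. apply Rmin_pos. apply Rmin_pos; lra.
    apply Rdiv_lt_0_compat; [|lra]. repeat apply Rmult_lt_0_compat; lra. }
  exists (mkposreal d Hd). intros h Hh0 Hh. simpl in Hh.
  assert (Hd1 : d <= b) by (unfold d; eapply Rle_trans; [apply Rmin_l|apply Rmin_l]).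
  assert (Hd2 : d <= r0 - r) by (unfold d; eapply Rle_trans; [apply Rmin_l|apply Rmin_r]).
  assert (Hd3 : d <= eps * b * b * Q0 / (3 * s + 2)) by (unfold d; apply Rmin_r).
  assert (Hrh : r + h < r0) by (pose proof (Rle_abs h); lra).
  destruct (sigma0_spec (r+h) Hrh) as [Hs1 _]. set (s1 := sigma0 (r + h)) in *.
  pose proof (sigma0_diff (r+h) r Hrh Hr) as HD. fold s s1 in HD.
  set (Q1 := s1 ^ 2 + s1 * s + s ^ 2 - s1 - s) in *.
  assert (HQ1 : b <= Q1).
  { unfold Q1. set (a := s1 - 2/3). replace s1 with (a + 2/3) by (unfold a; ring).
    replace s with (b + 2/3) by (unfold b; ring). assert (0 < a) by (unfold a; lra). nra. }
  assert (Hq : (s1 - s) = - h / Q1) by (field_simplify_eq; [lra| lra]).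
  assert (He : Rabs (s1 - s) <= Rabs h / b).
  { rewrite Hq. unfold Rdiv. rewrite Rabs_mult, Rabs_Ropp, Rabs_inv.
    rewrite (Rabs_right Q1) by lra. apply Rmult_le_compat_l. apply Rabs_pos.
    apply Rinv_le_contravar; lra. }
  replace (r + h - r) with h by ring.
  replace ((s1 - s) / h - - / Q0) with ((Q1 - Q0) / (Q1 * Q0)).
  2:{ rewrite Hq. field. repeat split; lra. }
  assert (HQ : Q1 - Q0 = (s1 - s) * (s1 + 2 * s - 1)) by (unfold Q1, Q0; ring).
  rewrite HQ. unfold Rdiv. rewrite !Rabs_mult, Rabs_inv, Rabs_mult.
  rewrite (Rabs_right Q1) by lra. rewrite (Rabs_right Q0) by lra.
  assert (Hhb : Rabs h / b < 1).
  { apply (Rmult_lt_reg_r b). lra. unfold Rdiv. rewrite Rmult_assoc, Rinv_l by lra. lra. }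
  assert (H3 : Rabs (s1 + 2 * s - 1) <= 3 * s + 2).
  { replace (s1 + 2*s - 1) with ((s1 - s) + (3 * s - 1)) by ring.
    eapply Rle_trans. apply Rabs_triang. rewrite (Rabs_right (3*s-1)) by lra. lra. }
  assert (Hinv : / (Q1 * Q0) <= / (b * Q0)).
  { apply Rinv_le_contravar. nra. apply Rmult_le_compat_r; lra. }
  apply Rle_lt_trans with (Rabs h / b * (3 * s + 2) * / (b * Q0)).
  { apply Rmult_le_compat. apply Rmult_le_pos; apply Rabs_pos.
    left; apply Rinv_0_lt_compat; nra.
    apply Rmult_le_compat; try apply Rabs_pos; auto. auto. }
  assert (Hh' : Rabs h < eps * b * b * Q0 / (3 * s + 2)) by lra.
  apply (Rmult_lt_compat_r (/ b * (3 * s + 2) * / (b * Q0))) in Hh'.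
  2:{ apply Rmult_lt_0_compat. apply Rmult_lt_0_compat. apply Rinv_0_lt_compat; lra. lra.
      apply Rinv_0_lt_compat; nra. }
  replace (eps * b * b * Q0 / (3 * s + 2) * (/ b * (3 * s + 2) * / (b * Q0))) with eps in Hh'
    by (field; repeat split; lra).
  unfold Rdiv in *. lra.
Qed.

Definition Ur0 := fun r => r < r0.
Lemma open_lt c : open (fun x => x < c).
Proof. apply open_lt. Qed.
Lemma open_gt c : open (fun x => c < x).
Proof. apply open_gt. Qed.

Lemma sigma0_smooth : Smooth (fun r => r < r0) sigma0.
Proof.
  intro k. induction k as [|k IH].
  - intros x Hx. apply (ex_derive_continuous (K:=R_AbsRing) (V:=R_NormedModule)).
    eexists. apply sigma0_derive; auto.
  - split.
    + intros x Hx. eexists. apply sigma0_derive; auto.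
    + apply Ck_ext with (fun r => (fun s => - / (s * (3 * s - 2))) (sigma0 r)).
      * apply open_lt.
      * intros x Hx. symmetry. apply is_derive_unique. apply sigma0_derive; auto.
      * apply (Ck_comp k _ (fun s => 2/3 < s) sigma0 (fun s => - / (s * (3 * s - 2)))); auto. apply open_lt.
        intros x Hx; apply sigma0_spec; auto.
        apply Smooth_ext with (fun s => (-1) * / (s * (3 * s - 2))). apply open_gt.
        intros; ring.
        apply Smooth_mult. apply open_gt. apply Smooth_const.
        apply Smooth_inv. apply open_gt. intros x Hx. nra.
        apply Smooth_mult. apply open_gt. apply Smooth_id.
        apply Smooth_plus. apply open_gt. apply Smooth_mult. apply open_gt. apply Smooth_const.
        apply Smooth_id. apply Smooth_const.
Qed.

Definition gfun l y := - (sigma0 (l * y / 2) - 1) * (3 * sigma0 (l * y / 2) - 1) - l * y.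
Definition Gfun l eps v := if Req_EM_T eps 0 then 0 else gfun l (eps * v) / eps.

Lemma open_lin_lt c d : open (fun v => c * v < d).
Proof.
  apply (open_comp (fun v => c * v) (fun y => y < d)).
  - intros x _. apply (continuous_mult (fun _ => c) (fun v => v)). apply continuous_const. apply continuous_id.
  - apply open_lt.
Qed.
Lemma open_lin_gt c d : open (fun v => d < c * v).
Proof.
  apply (open_comp (fun v => c * v) (fun y => d < y)).
  - intros x _. apply (continuous_mult (fun _ => c) (fun v => v)). apply continuous_const. apply continuous_id.
  - apply open_gt.
Qed.

Lemma G_gamma l eps v : eps * gamma l (eps * v) * v ^ 2 = Gfun l eps v.
Proof.
  unfold Gfun, gamma. destruct (Req_EM_T eps 0) as [e|e].
  - subst. ring.
  - destruct (Req_EM_T (eps * v) 0) as [e2|e2].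
    + assert (v = 0). { destruct (Rmult_integral _ _ e2); auto. contradiction. }
      subst v. unfold gfun. rewrite Rmult_0_r. replace (l * 0 / 2) with 0 by field.
      rewrite sigma0_0. field. auto.
    + unfold gfun. assert (v <> 0) by (intro; subst; apply e2; ring).
      field. auto.
Qed.

Lemma gfun_smooth l : Smooth (fun y => l * y < 2 * r0) (gfun l).
Proof.
  assert (HO : open (fun y => l * y < 2 * r0)) by apply open_lin_lt.
  assert (Hs : Smooth (fun y => l * y < 2 * r0) (fun y => sigma0 (l * y / 2))).
  { apply (Smooth_comp _ (fun r => r < r0) (fun y => l * y / 2) sigma0); auto.
    intros; lra. apply sigma0_smooth.
    apply Smooth_ext with (fun y => (l / 2) * y); auto. intros; field.
    apply Smooth_mult; auto. apply Smooth_const. apply Smooth_id. }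
  unfold gfun. apply Smooth_plus; auto.
  apply Smooth_mult; auto. apply Smooth_ext with (fun y => (-1) * (sigma0 (l * y / 2) + (-1))); auto.
  intros; ring. apply Smooth_mult; auto. apply Smooth_const. apply Smooth_plus; auto. apply Smooth_const.
  apply Smooth_plus; auto. apply Smooth_mult; auto. apply Smooth_const. apply Smooth_const.
  apply Smooth_ext with (fun y => (- l) * y); auto. intros; ring.
  apply Smooth_mult; auto. apply Smooth_const. apply Smooth_id.
Qed.

Lemma G_smooth l eps : Smooth (fun v => l * (eps * v) < 2 * r0) (Gfun l eps).
Proof.
  assert (HO : open (fun v => l * (eps * v) < 2 * r0)).
  { apply open_ext with (fun v => (l * eps) * v < 2 * r0). intros; split; intros; lra.
    apply open_lin_lt. }
  unfold Gfun. destruct (Req_EM_T eps 0) as [e|e].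
  - apply Smooth_const.
  - apply Smooth_ext with (fun v => / eps * gfun l (eps * v)); auto.
    intros; field; auto.
    apply Smooth_mult; auto. apply Smooth_const.
    apply (Smooth_comp _ (fun y => l * y < 2 * r0) (fun v => eps * v) (gfun l)); auto.
    apply gfun_smooth. apply Smooth_mult; auto. apply Smooth_const. apply Smooth_id.
Qed.

Lemma energy_sign l eps v : 0 < l -> 0 <= eps -> l * (eps * v) < 2 * r0 ->
  - l * v ^ 2 - v * Gfun l eps v <= 0.
Proof.
  intros Hl He Hv. unfold Gfun. destruct (Req_EM_T eps 0) as [e|e].
  - pose proof (pow2_ge_0 v). nra.
  - unfold gfun. set (r := l * (eps * v) / 2).
    assert (Hr : r < r0) by (unfold r; lra).
    destruct (sigma0_spec r Hr) as [Hs _].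
    pose proof (sigma0_sign r Hr) as Hsg. set (s := sigma0 r) in *. clearbody s.
    assert (Heq : - l * v ^ 2 - v * ((- (s - 1) * (3 * s - 1) - l * (eps * v)) / eps)
                  = ((s - 1) * r) * (3 * s - 1) * (2 / (l * eps * eps))).
    { unfold r. field. split; auto. lra. }
    rewrite Heq. assert (0 < eps) by lra.
    assert (0 < 2 / (l * eps * eps)). { apply Rdiv_lt_0_compat. lra. repeat apply Rmult_lt_0_compat; lra. }
    assert (0 < 3 * s - 1) by lra.
    assert (0 <= - ((s - 1) * r)) by lra.
    assert (0 <= (- ((s - 1) * r)) * (3 * s - 1) * (2 / (l * eps * eps))).
    { apply Rmult_le_pos. apply Rmult_le_pos; lra. lra. }
    lra.
Qed.

Record HypH (l : R) (h : R -> R) (m : R) : Prop := {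
  hl : 0 < l;
  hm : 0 < m;
  hmh : forall x, - l <= x <= l -> m <= h x;
  hcont : forall x, - l <= x <= l ->
     filterlim h (within (fun y => - l <= y <= l) (locally x)) (locally (h x)) }.

Definition clamp a b x := Rmax a (Rmin b x).
Definition hc l (h : R -> R) x := h (clamp (- l) l x).

Lemma clamp_in a b x : a <= b -> a <= clamp a b x <= b.
Proof. intros. unfold clamp. split. apply Rmax_l. apply Rmax_lub. auto. apply Rmin_l. Qed.

Lemma clamp_id a b x : a <= x <= b -> clamp a b x = x.
Proof. intros. unfold clamp. rewrite Rmin_right by lra. rewrite Rmax_right by lra. auto. Qed.

Lemma clamp_lip a b x y : Rabs (clamp a b x - clamp a b y) <= Rabs (x - y).
Proof.
  unfold clamp, Rmax, Rmin.
  repeat (destruct Rle_dec); unfold Rabs; repeat destruct Rcase_abs; lra.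
Qed.

Lemma clamp_cont a b x : continuous (clamp a b) x.
Proof.
  apply filterlim_locally. intros eps. exists eps. intros y Hy.
  unfold ball in *; simpl in *; unfold AbsRing_ball, abs, minus, plus, opp in *; simpl in *.
  eapply Rle_lt_trans. apply clamp_lip. auto.
Qed.

Lemma hc_cont l h m (H : HypH l h m) x : continuous (hc l h) x.
Proof.
  unfold hc. assert (Hl := hl _ _ _ H).
  apply (filterlim_comp _ _ _ (clamp (- l) l) h (locally x)
     (within (fun y => - l <= y <= l) (locally (clamp (- l) l x)))).
  - intros P HP. unfold within in HP. apply clamp_cont in HP.
    unfold filtermap in *. eapply filter_imp; [|exact HP]. simpl. intros y Hy.
    apply Hy. apply clamp_in. lra.
  - apply (hcont _ _ m); auto. apply clamp_in; lra.
Qed.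

Lemma hc_ge l h m (H : HypH l h m) x : m <= hc l h x.
Proof. unfold hc. apply (hmh l h m); auto. apply clamp_in. pose proof (hl _ _ _ H); lra. Qed.

Lemma hc_eq l h x : - l <= x <= l -> hc l h x = h x.
Proof. intros. unfold hc. rewrite clamp_id; auto. Qed.

Definition Kf l (h : R -> R) (n : nat) (u t : R) : R := t ^ 2 * (/ (hc l h t + u)) ^ (S n).
Definition In l (h : R -> R) n u := RInt (Kf l h n u) (- l) l.

Lemma Kf_derive l h m (H : HypH l h m) n u t : - m < u ->
  is_derive (fun z => Kf l h n z t) u (- INR (S n) * Kf l h (S n) u t).
Proof.
  intros Hu. pose proof (hc_ge l h m H t).
  unfold Kf. set (a := hc l h t) in *.
  evar (d : R). replace (- INR (S n) * (t ^ 2 * (/ (a + u)) ^ S (S n))) with d.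
  apply is_derive_scal.
  apply (is_derive_pow (fun z => / (a + z)) (S n) u (- 1 / (a + u) ^ 2)).
  apply is_derive_inv. 2: lra.
  auto_derive; auto. unfold d. simpl pow. field. lra.
Qed.

Lemma pow_cont k x : continuous (fun y : R => y ^ k) x.
Proof.
  apply (ex_derive_continuous (K:=R_AbsRing) (V:=R_NormedModule)).
  apply (ex_derive_pow (fun y => y)). apply ex_derive_id.
Qed.

Lemma Kf_cont_t l h m (H : HypH l h m) k u t : - m < u -> continuous (Kf l h k u) t.
Proof.
  intros Hu. pose proof (hc_ge l h m H t). unfold Kf.
  apply (continuous_mult (fun t => t ^ 2) (fun t => (/ (hc l h t + u)) ^ S k)).
  apply pow_cont.
  apply (continuous_comp (fun t => / (hc l h t + u)) (fun y => y ^ S k)).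
  apply continuous_Rinv_comp. apply (continuous_plus (hc l h) (fun _ => u)).
  apply (hc_cont l h m H). apply continuous_const. lra.
  apply pow_cont.
Qed.

Lemma Kf_cont_2d l h m (H : HypH l h m) k u t : - m < u -> continuity_2d_pt (Kf l h k) u t.
Proof.
  intros Hu. pose proof (hc_ge l h m H t). unfold Kf.
  apply continuity_2d_pt_mult.
  - apply (continuity_1d_2d_pt_comp (fun x => x ^ 2) (fun _ v => v)).
    apply continuity_pt_filterlim. apply pow_cont. apply continuity_2d_pt_id2.
  - apply (continuity_1d_2d_pt_comp (fun x => x ^ S k) (fun u v => / (hc l h v + u))).
    apply continuity_pt_filterlim. apply pow_cont.
    apply continuity_2d_pt_inv. 2: lra.
    apply continuity_2d_pt_plus. 2: apply continuity_2d_pt_id1.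
    apply continuity_2d_pt_filterlim. simpl.
    apply (filterlim_comp _ _ _ snd (hc l h) (locally (u, t)) (locally t)).
    + apply filterlim_locally. intros eps. exists eps. intros z [_ Hz]. exact Hz.
    + apply (hc_cont l h m H).
Qed.

Lemma In_derive l h m (H : HypH l h m) n u : - m < u ->
  is_derive (In l h n) u (- INR (S n) * In l h (S n) u).
Proof.
  intros Hu. unfold In.
  assert (HO : open (fun x => - m < x)) by apply open_gt.
  replace (- INR (S n) * RInt (Kf l h (S n) u) (- l) l) with
    (RInt (fun t => Derive (fun z => Kf l h n z t) u) (- l) l).
  - apply (is_derive_RInt_param (Kf l h n) (- l) l u).
    + apply (locally_open (fun x => - m < x)); auto. intros x Hx t _.
      eexists. apply (Kf_derive l h m H); auto.
    + intros t _. apply continuity_2d_pt_ext_loc with (fun u v => - INR (S n) * Kf l h (S n) u v).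
      * exists (mkposreal (u + m) ltac:(lra)). intros u' v' Hu' _. simpl in Hu'.
        symmetry. apply is_derive_unique. apply (Kf_derive l h m H).
        apply Rabs_def2 in Hu'. lra.
      * apply continuity_2d_pt_mult. apply continuity_2d_pt_const.
        apply (Kf_cont_2d l h m H); auto.
    + apply (locally_open (fun x => - m < x)); auto. intros x Hx.
      apply (ex_RInt_continuous (V:=R_CompleteNormedModule)). intros z _. apply (Kf_cont_t l h m H); auto.
  - rewrite (RInt_ext _ (fun t => scal (- INR (S n)) (Kf l h (S n) u t))).
    + rewrite (RInt_scal (V:=R_CompleteNormedModule)). reflexivity.
      apply (ex_RInt_continuous (V:=R_CompleteNormedModule)). intros z _. apply (Kf_cont_t l h m H); auto.
    + intros x _. apply is_derive_unique. apply (Kf_derive l h m H); auto.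
Qed.

Lemma In_smooth l h m (H : HypH l h m) : forall k n, Ck k (fun x => - m < x) (In l h n).
Proof.
  assert (HO : open (fun x => - m < x)) by apply open_gt.
  induction k as [|k IH]; intros n.
  - intros x Hx. apply (ex_derive_continuous (K:=R_AbsRing) (V:=R_NormedModule)).
    eexists. apply (In_derive l h m H); auto.
  - split.
    + intros x Hx. eexists. apply (In_derive l h m H); auto.
    + apply Ck_ext with (fun u => - INR (S n) * In l h (S n) u); auto.
      intros x Hx. symmetry. apply is_derive_unique. apply (In_derive l h m H); auto.
      apply Ck_mult; auto. apply Ck_const.
Qed.

Lemma In_nonneg l h m (H : HypH l h m) n u : - m < u -> 0 <= In l h n u.
Proof.
  intros Hu. pose proof (hl _ _ _ H). unfold In. apply RInt_ge_0. lra.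
  apply (ex_RInt_continuous (V:=R_CompleteNormedModule)). intros z _. apply (Kf_cont_t l h m H); auto.
  intros x _. unfold Kf. pose proof (hc_ge l h m H x). apply Rmult_le_pos. apply pow2_ge_0.
  apply pow_le. left. apply Rinv_0_lt_compat. lra.
Qed.

Definition Af l tb h r := tb ^ 2 + / (2 * l) * In l h 0 r.

Lemma Af_smooth l tb h m (H : HypH l h m) : Smooth (fun x => - m < x) (Af l tb h).
Proof.
  assert (HO : open (fun x => - m < x)) by apply open_gt.
  intro k. unfold Af. apply Ck_plus; auto. apply Ck_const. apply Ck_mult; auto. apply Ck_const.
  apply (In_smooth l h m H).
Qed.

Lemma Af_derive l tb h m (H : HypH l h m) r : - m < r ->
  is_derive (Af l tb h) r (- / (2 * l) * In l h 1 r).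
Proof.
  intros Hr. unfold Af.
  replace (- / (2 * l) * In l h 1 r) with (0 + / (2 * l) * (- INR 1 * In l h 1 r)) by (simpl; ring).
  apply (is_derive_plus (fun _ => tb ^ 2) (fun r => / (2 * l) * In l h 0 r)).
  apply (is_derive_const (K:=R_AbsRing) (V:=R_NormedModule)). apply is_derive_scal. apply (In_derive l h m H). auto.
Qed.

Lemma Af_pos l tb h m (H : HypH l h m) r : 0 < tb -> - m < r -> tb ^ 2 <= Af l tb h r /\ 0 < Af l tb h r.
Proof.
  intros Htb Hr. pose proof (hl _ _ _ H). unfold Af. pose proof (In_nonneg l h m H 0 r Hr).
  assert (0 <= / (2 * l) * In l h 0 r). apply Rmult_le_pos; auto. left; apply Rinv_0_lt_compat; lra.
  split. lra. pose proof (pow_lt tb 2 Htb). lra.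
Qed.

Lemma Af_decr l tb h m (H : HypH l h m) r1 r2 : - m < r1 -> r1 <= r2 -> Af l tb h r2 <= Af l tb h r1.
Proof.
  intros H1 H2. pose proof (hl _ _ _ H).
  destruct (MVT_gen (Af l tb h) r1 r2 (fun r => - / (2 * l) * In l h 1 r)) as [c [Hc1 Hc2]].
  - intros x Hx. apply (Af_derive l tb h m H). rewrite Rmin_left in Hx by lra. lra.
  - intros x Hx. apply continuity_pt_filterlim.
    apply (ex_derive_continuous (K:=R_AbsRing) (V:=R_NormedModule)).
    eexists. apply (Af_derive l tb h m H). rewrite Rmin_left in Hx by lra. lra.
  - rewrite Rmin_left in Hc1 by lra. rewrite Rmax_right in Hc1 by lra.
    pose proof (In_nonneg l h m H 1 c ltac:(lra)).
    assert (0 <= / (2 * l) * In l h 1 c * (r2 - r1)).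
    { apply Rmult_le_pos. apply Rmult_le_pos; auto. left; apply Rinv_0_lt_compat; lra. lra. }
    lra.
Qed.

Lemma tau0_eq l tb h m (H : HypH l h m) r : - m < r -> tau0 l tb h r = sqrt (Af l tb h r).
Proof.
  intros Hr. unfold tau0, Af, In. f_equal. f_equal. f_equal.
  apply RInt_ext. intros x Hx. pose proof (hl _ _ _ H).
  rewrite Rmin_left in Hx by lra. rewrite Rmax_right in Hx by lra.
  unfold Kf. rewrite hc_eq by lra. simpl. unfold Rdiv. ring.
Qed.

Lemma tau0'_eq l tb h m (H : HypH l h m) r : 0 < tb -> - m < r ->
  tau0 l tb h r * tau0' l tb h r = Derive (Af l tb h) r / 2.
Proof.
  intros Htb Hr. unfold tau0'.
  assert (HO : open (fun x => - m < x)) by apply open_gt.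
  rewrite (Derive_ext_loc _ (fun r => sqrt (Af l tb h r))).
  2:{ apply (locally_open (fun x => - m < x)); auto. intros; apply (tau0_eq l tb h m H); auto. }
  destruct (Af_pos l tb h m H r Htb Hr) as [_ Hp].
  assert (Hd : Derive (fun r : R_UniformSpace => sqrt (Af l tb h r)) r = Derive (Af l tb h) r / (2 * sqrt (Af l tb h r))).
  { apply is_derive_unique. apply is_derive_sqrt; auto. apply Derive_correct. eexists. apply (Af_derive l tb h m H r Hr). }
  rewrite Hd.
  rewrite (tau0_eq l tb h m H r Hr). pose proof (sqrt_lt_R0 _ Hp). field. lra.
Qed.

Lemma tau0_sq l tb h m (H : HypH l h m) r : 0 < tb -> - m < r -> tau0 l tb h r ^ 2 = Af l tb h r.
Proof.
  intros Htb Hr. rewrite (tau0_eq l tb h m H r Hr). destruct (Af_pos l tb h m H r Htb Hr).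
  simpl. rewrite Rmult_1_r. apply sqrt_sqrt. lra.
Qed.

Lemma ball_R (x e y : R) : ball x e y <-> Rabs (y - x) < e.
Proof. reflexivity. Qed.

Lemma cont_ex_RInt (g : R -> R) a b : (forall x, continuous g x) -> ex_RInt g a b.
Proof. intros H. apply (ex_RInt_continuous (V:=R_CompleteNormedModule)). intros; auto. Qed.

Lemma RInt_diff (g : R -> R) s t : (forall x, continuous g x) ->
  RInt g 0 s - RInt g 0 t = RInt g t s.
Proof.
  intros H. rewrite <- (RInt_Chasles (V:=R_CompleteNormedModule) g 0 t s).
  change (plus (RInt g 0 t) (RInt g t s)) with (RInt g 0 t + RInt g t s). ring.
  apply cont_ex_RInt; auto. apply cont_ex_RInt; auto.
Qed.

Lemma RInt_swap' (g : R -> R) a b : (forall x, continuous g x) -> RInt g a b = - RInt g b a.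
Proof.
  intros H. rewrite <- (opp_RInt_swap (V:=R_CompleteNormedModule) g b a). reflexivity.
  apply cont_ex_RInt; auto.
Qed.

Lemma abs_cont (g : R -> R) : (forall x, continuous g x) -> forall x, continuous (fun y => Rabs (g y)) x.
Proof.
  intros H x. apply (continuous_comp g Rabs). auto.
  apply continuity_pt_filterlim. apply Rcontinuity_abs.
Qed.

Lemma RInt_abs_bound (g k : R -> R) a b : (forall x, continuous g x) -> (forall x, continuous k x) ->
  (forall x, Rmin a b <= x <= Rmax a b -> Rabs (g x) <= k x) ->
  Rabs (RInt g a b) <= Rabs (RInt k a b).
Proof.
  intros Hg Hk Hb.
  assert (Hab : forall a b, a <= b -> (forall x, a <= x <= b -> Rabs (g x) <= k x) ->
     Rabs (RInt g a b) <= Rabs (RInt k a b)).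
  { clear a b Hb. intros a b Hab Hb.
    eapply Rle_trans. apply abs_RInt_le; auto. apply cont_ex_RInt; auto.
    eapply Rle_trans. 2: apply Rle_abs.
    apply RInt_le; auto. apply cont_ex_RInt. apply abs_cont; auto. apply cont_ex_RInt; auto.
    intros x Hx. apply Hb. lra. }
  destruct (Rle_dec a b) as [h|h].
  - apply Hab; auto. intros x Hx. apply Hb. rewrite Rmin_left, Rmax_right; lra.
  - rewrite (RInt_swap' g), (RInt_swap' k) by auto. rewrite !Rabs_Ropp.
    apply Hab. lra. intros x Hx. apply Hb. rewrite Rmin_right, Rmax_left; lra.
Qed.

Lemma RInt_const_bound (g : R -> R) a b M : (forall x, continuous g x) ->
  (forall x, Rabs (g x) <= M) -> Rabs (RInt g a b) <= M * Rabs (b - a).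
Proof.
  intros Hg HM. eapply Rle_trans. apply (RInt_abs_bound g (fun _ => M)); auto.
  intros; apply continuous_const.
  rewrite RInt_const. change (scal (b - a) M) with ((b - a) * M).
  rewrite Rabs_mult. assert (0 <= M) by (pose proof (HM 0); pose proof (Rabs_pos (g 0)); lra).
  rewrite (Rabs_right M) by lra. lra.
Qed.

Lemma exp_abs_cont K x : continuous (fun s => exp (K * Rabs s)) x.
Proof.
  apply (continuous_comp (fun s => K * Rabs s) exp).
  apply (continuous_mult (fun _ => K) (fun s => Rabs s)). apply continuous_const.
  apply continuity_pt_filterlim. apply Rcontinuity_abs.
  apply continuity_pt_filterlim. apply derivable_continuous_pt. apply derivable_pt_exp.
Qed.

Lemma RInt_exp_bound K t : 0 < K -> Rabs (RInt (fun s => exp (K * Rabs s)) 0 t) <= exp (K * Rabs t) / K.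
Proof.
  intros HK.
  destruct (Rle_dec 0 t) as [h|h].
  - rewrite (RInt_ext _ (fun s => exp (K * s))).
    2:{ intros x Hx. rewrite Rmin_left, Rmax_right in Hx by lra. rewrite Rabs_right by lra. auto. }
    rewrite (is_RInt_unique (fun s => exp (K * s)) 0 t (exp (K * t) / K - exp (K * 0) / K)).
    + assert (Hge : exp (K * 0) <= exp (K * t)).
      { destruct (Req_dec t 0). subst; lra. left. apply exp_increasing. nra. }
      assert (HKi : 0 < / K) by (apply Rinv_0_lt_compat; lra).
      pose proof (exp_pos (K * 0)).
      rewrite Rabs_right. rewrite (Rabs_right t) by lra. unfold Rdiv. nra.
      apply Rle_ge. unfold Rdiv. nra.
    + apply (is_RInt_derive (V:=R_CompleteNormedModule) (fun s => exp (K * s) / K)).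
      * intros x _. auto_derive. auto. field. lra.
      * intros x _. apply (continuous_comp (fun s => K * s) exp).
        apply (continuous_mult (fun _ => K) (fun s => s)). apply continuous_const. apply continuous_id.
        apply continuity_pt_filterlim. apply derivable_continuous_pt. apply derivable_pt_exp.
  - rewrite (RInt_swap' _ 0 t) by apply exp_abs_cont. rewrite Rabs_Ropp.
    rewrite (RInt_ext _ (fun s => exp (- K * s))).
    2:{ intros x Hx. rewrite Rmin_left, Rmax_right in Hx by lra. rewrite Rabs_left by lra. f_equal; ring. }
    rewrite (is_RInt_unique (fun s => exp (- K * s)) t 0 ((- exp (- K * 0) / K) - (- exp (- K * t) / K))).
    + rewrite (Rabs_left t) by lra. replace (K * - t) with (- K * t) by ring.
      rewrite Rabs_right. pose proof (exp_pos (- K * 0)).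
      unfold Rdiv. assert (0 < / K) by (apply Rinv_0_lt_compat; lra). nra.
      apply Rle_ge. unfold Rdiv. rewrite Rmult_0_r, exp_0.
      assert (1 <= exp (- K * t)). { rewrite <- exp_0. left. apply exp_increasing. nra. }
      assert (0 < / K) by (apply Rinv_0_lt_compat; lra). nra.
    + apply (is_RInt_derive (V:=R_CompleteNormedModule) (fun s => - exp (- K * s) / K)).
      * intros x _. auto_derive. auto. field. lra.
      * intros x _. apply (continuous_comp (fun s => - K * s) exp).
        apply (continuous_mult (fun _ => - K) (fun s => s)). apply continuous_const. apply continuous_id.
        apply continuity_pt_filterlim. apply derivable_continuous_pt. apply derivable_pt_exp.
Qed.

Record PicH (f1 f2 : R -> R -> R) (L M : R) : Prop := {
  pL : 0 < L; pM : 0 <= M;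
  lip1 : forall a b a' b', Rabs (f1 a b - f1 a' b') <= L * (Rabs (a - a') + Rabs (b - b'));
  lip2 : forall a b a' b', Rabs (f2 a b - f2 a' b') <= L * (Rabs (a - a') + Rabs (b - b'));
  bd1 : forall a b, Rabs (f1 a b) <= M;
  bd2 : forall a b, Rabs (f2 a b) <= M }.

Lemma comp_cont (f : R -> R -> R) L (p q : R -> R) Mp :
  0 < L -> 0 <= Mp ->
  (forall a b a' b', Rabs (f a b - f a' b') <= L * (Rabs (a - a') + Rabs (b - b'))) ->
  (forall s t, Rabs (p s - p t) <= Mp * Rabs (s - t)) ->
  (forall s t, Rabs (q s - q t) <= Mp * Rabs (s - t)) ->
  forall t, continuous (fun s => f (p s) (q s)) t.
Proof.
  intros HL HM Hf Hp Hq t. apply filterlim_locally. intros eps.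
  assert (Hd : 0 < eps / (2 * L * Mp + 1)).
  { apply Rdiv_lt_0_compat. apply cond_pos. nra. }
  exists (mkposreal _ Hd). intros s Hs. rewrite ball_R in *. simpl in Hs.
  eapply Rle_lt_trans. apply Hf.
  pose proof (Hp s t). pose proof (Hq s t).
  apply Rle_lt_trans with (L * (2 * Mp * Rabs (s - t))).
  { apply Rmult_le_compat_l. lra. lra. }
  assert (Rabs (s - t) * (2 * L * Mp + 1) < eps).
  { apply (Rmult_lt_compat_r (2 * L * Mp + 1)) in Hs. 2: nra.
    replace (eps / (2 * L * Mp + 1) * (2 * L * Mp + 1)) with (pos eps) in Hs by (field; nra). lra. }
  pose proof (Rabs_pos (s - t)). nra.
Qed.

Lemma lim_bound (u : nat -> R) (l a B : R) n : is_lim_seq u l ->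
  (forall m, (n <= m)%nat -> Rabs (u m - a) <= B) -> Rabs (l - a) <= B.
Proof.
  intros Hl Hb. destruct (Rle_dec (Rabs (l - a)) B) as [h|h]; auto. exfalso.
  apply is_lim_seq_spec in Hl. unfold is_lim_seq in Hl. cbv beta iota delta [is_lim_seq'] in Hl. assert (He : 0 < Rabs (l - a) - B) by lra.
  destruct (Hl (mkposreal _ He)) as [N HN]. simpl in HN.
  specialize (HN (max N n) ltac:(lia)). specialize (Hb (max N n) ltac:(lia)).
  pose proof (Rabs_triang (u (max N n) - a) (l - u (max N n))).
  replace (u (max N n) - a + (l - u (max N n))) with (l - a) in H by ring.
  rewrite Rabs_minus_sym in HN. lra.
Qed.

Lemma zero_lim a b c : (forall n, a <= b + c * (/ 2) ^ n) -> a <= b.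
Proof.
  intros H. destruct (Rle_dec a b) as [h|h]; auto. exfalso.
  destruct (Rle_dec c 0) as [hc|hc].
  - specialize (H O). simpl in H. lra.
  - assert (Hg : is_lim_seq (fun n => (/ 2) ^ n) 0).
    { apply is_lim_seq_geom. rewrite Rabs_right; lra. }
    apply is_lim_seq_spec in Hg. cbv beta iota delta [is_lim_seq'] in Hg.
    assert (He : 0 < (a - b) / c) by (apply Rdiv_lt_0_compat; lra).
    destruct (Hg (mkposreal _ He)) as [N HN]. specialize (HN N (le_n _)). simpl in HN.
    specialize (H N). rewrite Rminus_0_r, Rabs_right in HN.
    2:{ apply Rle_ge, pow_le; lra. }
    apply (Rmult_lt_compat_l c) in HN. 2: lra.
    replace (c * ((a - b) / c)) with (a - b) in HN by (field; lra). lra.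
Qed.


Fixpoint pic (f1 f2 : R -> R -> R) (x0 y0 : R) (n : nat) : (R -> R) * (R -> R) :=
  match n with
  | O => (fun _ => x0, fun _ => y0)
  | S n => let p := pic f1 f2 x0 y0 n in
           (fun t => x0 + RInt (fun s => f1 (fst p s) (snd p s)) 0 t,
            fun t => y0 + RInt (fun s => f2 (fst p s) (snd p s)) 0 t)
  end.

Lemma pic_lip f1 f2 L M x0 y0 (H : PicH f1 f2 L M) n :
  (forall s t, Rabs (fst (pic f1 f2 x0 y0 n) s - fst (pic f1 f2 x0 y0 n) t) <= M * Rabs (s - t)) /\
  (forall s t, Rabs (snd (pic f1 f2 x0 y0 n) s - snd (pic f1 f2 x0 y0 n) t) <= M * Rabs (s - t)).
Proof.
  pose proof (pL _ _ _ _ H). pose proof (pM _ _ _ _ H).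
  induction n as [|n [IH1 IH2]]; simpl.
  - split; intros; rewrite Rminus_eq_0, Rabs_R0; pose proof (Rabs_pos (s - t)); nra.
  - split; intros s t.
    + replace (x0 + RInt _ 0 s - (x0 + RInt _ 0 t)) with
        (RInt (fun s => f1 (fst (pic f1 f2 x0 y0 n) s) (snd (pic f1 f2 x0 y0 n) s)) 0 s -
         RInt (fun s => f1 (fst (pic f1 f2 x0 y0 n) s) (snd (pic f1 f2 x0 y0 n) s)) 0 t) by ring.
      rewrite RInt_diff. apply RInt_const_bound.
      apply (comp_cont f1 L _ _ M); auto. apply (lip1 _ _ _ _ H).
      intros; exact (bd1 _ _ _ _ H _ _).
      apply (comp_cont f1 L _ _ M); auto. apply (lip1 _ _ _ _ H).
    + replace (y0 + RInt _ 0 s - (y0 + RInt _ 0 t)) with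
        (RInt (fun s => f2 (fst (pic f1 f2 x0 y0 n) s) (snd (pic f1 f2 x0 y0 n) s)) 0 s -
         RInt (fun s => f2 (fst (pic f1 f2 x0 y0 n) s) (snd (pic f1 f2 x0 y0 n) s)) 0 t) by ring.
      rewrite RInt_diff. apply RInt_const_bound.
      apply (comp_cont f2 L _ _ M); auto. apply (lip2 _ _ _ _ H).
      intros; exact (bd2 _ _ _ _ H _ _).
      apply (comp_cont f2 L _ _ M); auto. apply (lip2 _ _ _ _ H).
Qed.

Lemma pic_cont1 f1 f2 L M x0 y0 (H : PicH f1 f2 L M) n t :
  continuous (fun s => f1 (fst (pic f1 f2 x0 y0 n) s) (snd (pic f1 f2 x0 y0 n) s)) t.
Proof.
  destruct (pic_lip f1 f2 L M x0 y0 H n).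
  apply (comp_cont f1 L _ _ M); auto. apply (pL _ _ _ _ H). apply (pM _ _ _ _ H). apply (lip1 _ _ _ _ H).
Qed.
Lemma pic_cont2 f1 f2 L M x0 y0 (H : PicH f1 f2 L M) n t :
  continuous (fun s => f2 (fst (pic f1 f2 x0 y0 n) s) (snd (pic f1 f2 x0 y0 n) s)) t.
Proof.
  destruct (pic_lip f1 f2 L M x0 y0 H n).
  apply (comp_cont f2 L _ _ M); auto. apply (pL _ _ _ _ H). apply (pM _ _ _ _ H). apply (lip2 _ _ _ _ H).
Qed.

Lemma RInt_sub (g k : R -> R) t : (forall x, continuous g x) -> (forall x, continuous k x) ->
  RInt g 0 t - RInt k 0 t = RInt (fun s => g s - k s) 0 t.
Proof.
  intros Hg Hk. rewrite (RInt_minus (V:=R_CompleteNormedModule) g k). reflexivity.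
  apply cont_ex_RInt; auto. apply cont_ex_RInt; auto.
Qed.

Lemma minus_cont (g k : R -> R) x : continuous g x -> continuous k x -> continuous (fun s => g s - k s) x.
Proof.
  intros. apply (continuous_plus g (fun s => - k s)); auto.
  apply (continuous_comp k Ropp); auto. apply continuity_pt_filterlim. apply continuity_pt_opp.
  apply continuity_pt_id.
Qed.

Lemma int_step (g k : R -> R) L c K t : 0 < K -> 0 <= c -> 0 <= L ->
  (forall x, continuous g x) -> (forall x, continuous k x) ->
  (forall s, Rabs (g s - k s) <= L * (c * exp (K * Rabs s))) ->
  Rabs (RInt g 0 t - RInt k 0 t) <= L * c * exp (K * Rabs t) / K.
Proof.
  intros HK Hc HL Hg Hk Hb. rewrite RInt_sub by auto.
  eapply Rle_trans. apply (RInt_abs_bound _ (fun s => (L * c) * exp (K * Rabs s))).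
  intros; apply minus_cont; auto.
  intros x. apply (continuous_mult (fun _ => L * c) (fun s => exp (K * Rabs s))).
  apply continuous_const. apply exp_abs_cont.
  intros x _. rewrite Rmult_assoc. auto.
  assert (Hs : RInt (fun s => L * c * exp (K * Rabs s)) 0 t = (L * c) * RInt (fun s => exp (K * Rabs s)) 0 t).
  { exact (RInt_scal (V:=R_CompleteNormedModule) (fun s => exp (K * Rabs s)) 0 t (L * c) (cont_ex_RInt _ _ _ (exp_abs_cont K))). }
  rewrite Hs.
  rewrite Rabs_mult, (Rabs_right (L * c)) by nra.
  apply Rle_trans with (L * c * (exp (K * Rabs t) / K)).
  apply Rmult_le_compat_l. nra. apply RInt_exp_bound; auto.
  right; field; lra.
Qed.

Lemma le_exp x : x <= exp x.
Proof.
  destruct (Req_dec x 0). subst. rewrite exp_0. lra.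
  pose proof (exp_ineq1 x H). lra.
Qed.

Lemma addK (x a : R) : x + a - x = a.
Proof. ring. Qed.
Lemma addK2 (x a b : R) : x + a - (x + b) = a - b.
Proof. ring. Qed.

Definition px f1 f2 x0 y0 n := fst (pic f1 f2 x0 y0 n).
Definition py f1 f2 x0 y0 n := snd (pic f1 f2 x0 y0 n).

Lemma pic_diff f1 f2 L M x0 y0 (H : PicH f1 f2 L M) n t :
  Rabs (px f1 f2 x0 y0 (S n) t - px f1 f2 x0 y0 n t) + Rabs (py f1 f2 x0 y0 (S n) t - py f1 f2 x0 y0 n t)
  <= (2 * M / (4 * L)) * (/ 2) ^ n * exp ((4 * L) * Rabs t).
Proof.
  pose proof (pL _ _ _ _ H) as HL. pose proof (pM _ _ _ _ H) as HM.
  assert (HC : 0 <= 2 * M / (4 * L)) by (apply Rmult_le_pos; [lra|left; apply Rinv_0_lt_compat; lra]).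
  revert t; induction n as [|n IH]; intros t.
  - unfold px, py. cbn [pic fst snd].
    rewrite !addK.
    pose proof (RInt_const_bound (fun _ => f1 x0 y0) 0 t M ltac:(intros; apply continuous_const) ltac:(intros; apply (bd1 _ _ _ _ H))).
    pose proof (RInt_const_bound (fun _ => f2 x0 y0) 0 t M ltac:(intros; apply continuous_const) ltac:(intros; apply (bd2 _ _ _ _ H))).
    rewrite Rminus_0_r in *. pose proof (le_exp (4 * L * Rabs t)).
    replace (2 * M / (4 * L) * 1 * exp (4 * L * Rabs t)) with (2 * M * (exp (4 * L * Rabs t) / (4 * L))) by (field; lra).
    assert (Rabs t <= exp (4 * L * Rabs t) / (4 * L)).
    { apply (Rmult_le_reg_l (4 * L)). lra. replace (4 * L * (exp (4 * L * Rabs t) / (4 * L))) with (exp (4 * L * Rabs t)) by (field; lra). lra. }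
    nra.
  - unfold px, py. simpl pic. cbv zeta. simpl fst; simpl snd.
    set (G1 := fun n => fun s => f1 (fst (pic f1 f2 x0 y0 n) s) (snd (pic f1 f2 x0 y0 n) s)).
    set (G2 := fun n => fun s => f2 (fst (pic f1 f2 x0 y0 n) s) (snd (pic f1 f2 x0 y0 n) s)).
    change (Rabs (x0 + RInt (G1 (S n)) 0 t - (x0 + RInt (G1 n) 0 t)) +
            Rabs (y0 + RInt (G2 (S n)) 0 t - (y0 + RInt (G2 n) 0 t)) <=
            2 * M / (4 * L) * (/ 2) ^ S n * exp (4 * L * Rabs t)).
    rewrite !addK2.
    assert (Hq : 0 <= 2 * M / (4 * L) * (/ 2) ^ n) by (apply Rmult_le_pos; auto; apply pow_le; lra).
    pose proof (int_step (G1 (S n)) (G1 n) L (2 * M / (4 * L) * (/ 2) ^ n) (4 * L) t ltac:(lra) Hq ltac:(lra)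
      (fun x => pic_cont1 f1 f2 L M x0 y0 H (S n) x) (fun x => pic_cont1 f1 f2 L M x0 y0 H n x)) as A1.
    pose proof (int_step (G2 (S n)) (G2 n) L (2 * M / (4 * L) * (/ 2) ^ n) (4 * L) t ltac:(lra) Hq ltac:(lra)
      (fun x => pic_cont2 f1 f2 L M x0 y0 H (S n) x) (fun x => pic_cont2 f1 f2 L M x0 y0 H n x)) as A2.
    assert (B : forall s, L * (Rabs (fst (pic f1 f2 x0 y0 (S n)) s - fst (pic f1 f2 x0 y0 n) s) +
                              Rabs (snd (pic f1 f2 x0 y0 (S n)) s - snd (pic f1 f2 x0 y0 n) s))
                <= L * (2 * M / (4 * L) * (/ 2) ^ n * exp (4 * L * Rabs s))).
    { intros s. apply Rmult_le_compat_l. lra. apply IH. }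
    assert (A1' := A1 (fun s => Rle_trans _ _ _ (lip1 _ _ _ _ H _ _ _ _) (B s))).
    assert (A2' := A2 (fun s => Rle_trans _ _ _ (lip2 _ _ _ _ H _ _ _ _) (B s))).
    replace (2 * M / (4 * L) * (/ 2) ^ S n * exp (4 * L * Rabs t)) with
      (L * (2 * M / (4 * L) * (/ 2) ^ n) * exp (4 * L * Rabs t) / (4 * L) +
       L * (2 * M / (4 * L) * (/ 2) ^ n) * exp (4 * L * Rabs t) / (4 * L)) by (simpl; field; lra).
    lra.
Qed.

Lemma pic_cauchy f1 f2 L M x0 y0 (H : PicH f1 f2 L M) n j t :
  Rabs (px f1 f2 x0 y0 (n + j) t - px f1 f2 x0 y0 n t) + Rabs (py f1 f2 x0 y0 (n + j) t - py f1 f2 x0 y0 n t)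
  <= 2 * (2 * M / (4 * L)) * exp ((4 * L) * Rabs t) * ((/ 2) ^ n - (/ 2) ^ (n + j)).
Proof.
  induction j as [|j IH].
  - rewrite Nat.add_0_r, !Rminus_eq_0, Rabs_R0. lra.
  - rewrite Nat.add_succ_r. pose proof (pic_diff f1 f2 L M x0 y0 H (n + j) t).
    pose proof (Rabs_triang (px f1 f2 x0 y0 (S (n + j)) t - px f1 f2 x0 y0 (n + j) t)
                            (px f1 f2 x0 y0 (n + j) t - px f1 f2 x0 y0 n t)).
    pose proof (Rabs_triang (py f1 f2 x0 y0 (S (n + j)) t - py f1 f2 x0 y0 (n + j) t)
                            (py f1 f2 x0 y0 (n + j) t - py f1 f2 x0 y0 n t)).
    replace (px f1 f2 x0 y0 (S (n + j)) t - px f1 f2 x0 y0 (n + j) t +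
       (px f1 f2 x0 y0 (n + j) t - px f1 f2 x0 y0 n t)) with
       (px f1 f2 x0 y0 (S (n + j)) t - px f1 f2 x0 y0 n t) in H1 by ring.
    replace (py f1 f2 x0 y0 (S (n + j)) t - py f1 f2 x0 y0 (n + j) t +
       (py f1 f2 x0 y0 (n + j) t - py f1 f2 x0 y0 n t)) with
       (py f1 f2 x0 y0 (S (n + j)) t - py f1 f2 x0 y0 n t) in H2 by ring.
    replace (2 * (2 * M / (4 * L)) * exp (4 * L * Rabs t) * ((/ 2) ^ n - (/ 2) ^ S (n + j))) with
      (2 * M / (4 * L) * (/ 2) ^ (n + j) * exp (4 * L * Rabs t) +
       2 * (2 * M / (4 * L)) * exp (4 * L * Rabs t) * ((/ 2) ^ n - (/ 2) ^ (n + j))) by (simpl; field; pose proof (pL _ _ _ _ H); lra).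
    lra.
Qed.

Lemma pow_half_pos n : 0 < (/ 2) ^ n.
Proof. apply pow_lt. lra. Qed.

Lemma pic_cauchy1 f1 f2 L M x0 y0 (H : PicH f1 f2 L M) n m t : (n <= m)%nat ->
  Rabs (px f1 f2 x0 y0 m t - px f1 f2 x0 y0 n t) <= 2 * (2 * M / (4 * L)) * exp ((4 * L) * Rabs t) * (/ 2) ^ n /\
  Rabs (py f1 f2 x0 y0 m t - py f1 f2 x0 y0 n t) <= 2 * (2 * M / (4 * L)) * exp ((4 * L) * Rabs t) * (/ 2) ^ n.
Proof.
  intros Hnm. replace m with (n + (m - n))%nat by lia.
  pose proof (pic_cauchy f1 f2 L M x0 y0 H n (m - n) t).
  pose proof (pL _ _ _ _ H). pose proof (pM _ _ _ _ H).
  assert (0 <= 2 * (2 * M / (4 * L)) * exp ((4 * L) * Rabs t)).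
  { apply Rmult_le_pos. apply Rmult_le_pos. lra. apply Rmult_le_pos; [lra|left; apply Rinv_0_lt_compat; lra].
    left; apply exp_pos. }
  pose proof (pow_half_pos (n + (m - n))).
  pose proof (Rabs_pos (px f1 f2 x0 y0 (n + (m - n)) t - px f1 f2 x0 y0 n t)).
  pose proof (Rabs_pos (py f1 f2 x0 y0 (n + (m - n)) t - py f1 f2 x0 y0 n t)).
  split; nra.
Qed.

Lemma cauchy_of (u : nat -> R) c : 0 <= c -> (forall n m, (n <= m)%nat -> Rabs (u m - u n) <= c * (/ 2) ^ n) ->
  ex_finite_lim_seq u.
Proof.
  intros Hc Hb. apply ex_lim_seq_cauchy_corr. intros eps.
  assert (Hg : is_lim_seq (fun n => (/ 2) ^ n) 0).
  { apply is_lim_seq_geom. rewrite Rabs_right; lra. }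
  apply is_lim_seq_spec in Hg. cbv beta iota delta [is_lim_seq'] in Hg.
  assert (He : 0 < eps / (2 * c + 1)) by (apply Rdiv_lt_0_compat; [apply cond_pos|lra]).
  destruct (Hg (mkposreal _ He)) as [N HN]. exists N. intros n m Hn Hm.
  specialize (HN N (le_n _)). simpl in HN. rewrite Rminus_0_r, Rabs_right in HN.
  2:{ apply Rle_ge, pow_le; lra. }
  pose proof (Hb N n Hn). pose proof (Hb N m Hm).
  pose proof (Rabs_triang (u n - u N) (u N - u m)).
  replace (u n - u N + (u N - u m)) with (u n - u m) in H1 by ring.
  rewrite (Rabs_minus_sym (u N) (u m)) in H1.
  assert (c * (/ 2) ^ N * (2 * c + 1) <= eps / (2 * c + 1) * (2 * c + 1) * c).
  { pose proof (pow_half_pos N). nra. }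
  replace (eps / (2 * c + 1) * (2 * c + 1) * c) with (eps * c) in H2 by (field; lra).
  assert (2 * (c * (/ 2) ^ N) < eps).
  { pose proof (pow_half_pos N). destruct (Req_dec c 0). subst. pose proof (cond_pos eps). lra.
    nra. }
  lra.
Qed.

Definition limX f1 f2 x0 y0 t := real (Lim_seq (fun n => px f1 f2 x0 y0 n t)).
Definition limY f1 f2 x0 y0 t := real (Lim_seq (fun n => py f1 f2 x0 y0 n t)).

Lemma lim_of (u : nat -> R) : ex_finite_lim_seq u -> is_lim_seq u (real (Lim_seq u)).
Proof.
  intros [l Hl]. rewrite (is_lim_seq_unique _ _ Hl). simpl. auto.
Qed.

Lemma limX_spec f1 f2 L M x0 y0 (H : PicH f1 f2 L M) t :
  is_lim_seq (fun n => px f1 f2 x0 y0 n t) (limX f1 f2 x0 y0 t) /\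
  is_lim_seq (fun n => py f1 f2 x0 y0 n t) (limY f1 f2 x0 y0 t).
Proof.
  pose proof (pL _ _ _ _ H). pose proof (pM _ _ _ _ H).
  assert (0 <= 2 * (2 * M / (4 * L)) * exp ((4 * L) * Rabs t)).
  { apply Rmult_le_pos. apply Rmult_le_pos. lra. apply Rmult_le_pos; [lra|left; apply Rinv_0_lt_compat; lra].
    left; apply exp_pos. }
  split; apply lim_of; eapply cauchy_of; eauto; intros n m Hnm;
    apply (pic_cauchy1 f1 f2 L M x0 y0 H n m t Hnm).
Qed.

Lemma limX_bound f1 f2 L M x0 y0 (H : PicH f1 f2 L M) n t :
  Rabs (limX f1 f2 x0 y0 t - px f1 f2 x0 y0 n t) <= 2 * (2 * M / (4 * L)) * exp ((4 * L) * Rabs t) * (/ 2) ^ n /\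
  Rabs (limY f1 f2 x0 y0 t - py f1 f2 x0 y0 n t) <= 2 * (2 * M / (4 * L)) * exp ((4 * L) * Rabs t) * (/ 2) ^ n.
Proof.
  destruct (limX_spec f1 f2 L M x0 y0 H t) as [A B]. split.
  - apply (lim_bound _ _ _ _ n A). intros m Hm. apply (pic_cauchy1 f1 f2 L M x0 y0 H n m t Hm).
  - apply (lim_bound _ _ _ _ n B). intros m Hm. apply (pic_cauchy1 f1 f2 L M x0 y0 H n m t Hm).
Qed.

Lemma limX_lip f1 f2 L M x0 y0 (H : PicH f1 f2 L M) :
  (forall s t, Rabs (limX f1 f2 x0 y0 s - limX f1 f2 x0 y0 t) <= M * Rabs (s - t)) /\
  (forall s t, Rabs (limY f1 f2 x0 y0 s - limY f1 f2 x0 y0 t) <= M * Rabs (s - t)).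
Proof.
  split; intros s t; apply (zero_lim _ _ (2 * (2 * M / (4 * L)) * exp ((4 * L) * Rabs s) +
                                          2 * (2 * M / (4 * L)) * exp ((4 * L) * Rabs t))); intros n;
  destruct (limX_bound f1 f2 L M x0 y0 H n s) as [As Bs];
  destruct (limX_bound f1 f2 L M x0 y0 H n t) as [At Bt];
  destruct (pic_lip f1 f2 L M x0 y0 H n) as [P Q].
  - specialize (P s t). fold (px f1 f2 x0 y0 n) in P.
    set (a := limX f1 f2 x0 y0 s) in *. set (b := limX f1 f2 x0 y0 t) in *.
    set (c := px f1 f2 x0 y0 n s) in *. set (d := px f1 f2 x0 y0 n t) in *.
    pose proof (Rabs_triang (a - c) (c - b)). pose proof (Rabs_triang (c - d) (d - b)).
    replace (a - c + (c - b)) with (a - b) in H0 by ring. replace (c - d + (d - b)) with (c - b) in H1 by ring.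
    rewrite (Rabs_minus_sym d b) in H1. lra.
  - specialize (Q s t). fold (py f1 f2 x0 y0 n) in Q.
    set (a := limY f1 f2 x0 y0 s) in *. set (b := limY f1 f2 x0 y0 t) in *.
    set (c := py f1 f2 x0 y0 n s) in *. set (d := py f1 f2 x0 y0 n t) in *.
    pose proof (Rabs_triang (a - c) (c - b)). pose proof (Rabs_triang (c - d) (d - b)).
    replace (a - c + (c - b)) with (a - b) in H0 by ring. replace (c - d + (d - b)) with (c - b) in H1 by ring.
    rewrite (Rabs_minus_sym d b) in H1. lra.
Qed.

Lemma lim_cont1 f1 f2 L M x0 y0 (H : PicH f1 f2 L M) t :
  continuous (fun s => f1 (limX f1 f2 x0 y0 s) (limY f1 f2 x0 y0 s)) t.
Proof.
  destruct (limX_lip f1 f2 L M x0 y0 H).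
  apply (comp_cont f1 L _ _ M); auto. apply (pL _ _ _ _ H). apply (pM _ _ _ _ H). apply (lip1 _ _ _ _ H).
Qed.
Lemma lim_cont2 f1 f2 L M x0 y0 (H : PicH f1 f2 L M) t :
  continuous (fun s => f2 (limX f1 f2 x0 y0 s) (limY f1 f2 x0 y0 s)) t.
Proof.
  destruct (limX_lip f1 f2 L M x0 y0 H).
  apply (comp_cont f2 L _ _ M); auto. apply (pL _ _ _ _ H). apply (pM _ _ _ _ H). apply (lip2 _ _ _ _ H).
Qed.

Lemma lim_int f1 f2 L M x0 y0 (H : PicH f1 f2 L M) t :
  limX f1 f2 x0 y0 t = x0 + RInt (fun s => f1 (limX f1 f2 x0 y0 s) (limY f1 f2 x0 y0 s)) 0 t /\
  limY f1 f2 x0 y0 t = y0 + RInt (fun s => f2 (limX f1 f2 x0 y0 s) (limY f1 f2 x0 y0 s)) 0 t.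
Proof.
  pose proof (pL _ _ _ _ H) as HL. pose proof (pM _ _ _ _ H) as HM.
  set (C := 2 * M / (4 * L)).
  assert (HC : 0 <= C) by (apply Rmult_le_pos; [lra|left; apply Rinv_0_lt_compat; lra]).
  assert (Hstep : forall n s, L * (Rabs (fst (pic f1 f2 x0 y0 n) s - limX f1 f2 x0 y0 s) +
                                   Rabs (snd (pic f1 f2 x0 y0 n) s - limY f1 f2 x0 y0 s))
                  <= L * ((4 * C * (/ 2) ^ n) * exp (4 * L * Rabs s))).
  { intros n s. apply Rmult_le_compat_l. lra. destruct (limX_bound f1 f2 L M x0 y0 H n s).
    unfold px, py in *. rewrite (Rabs_minus_sym (fst _ s)), (Rabs_minus_sym (snd _ s)). fold C in H0, H1. lra. }
  assert (Hq : forall n, 0 <= 4 * C * (/ 2) ^ n) by (intros; pose proof (pow_half_pos n); nra).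
  split; apply Rle_antisym; apply Rminus_le; rewrite <- (Rplus_0_r (_ - _));
  apply (zero_lim _ _ (2 * C * exp (4 * L * Rabs t))); intros n;
  destruct (limX_bound f1 f2 L M x0 y0 H (S n) t) as [B1 B2]; fold C in B1, B2.
  - pose proof (int_step (fun s : R => f1 (fst (pic f1 f2 x0 y0 n) s) (snd (pic f1 f2 x0 y0 n) s))
                          (fun s : R => f1 (limX f1 f2 x0 y0 s) (limY f1 f2 x0 y0 s))
         L _ (4 * L) t ltac:(lra) (Hq n) ltac:(lra) (pic_cont1 f1 f2 L M x0 y0 H n) (lim_cont1 f1 f2 L M x0 y0 H)
       (fun s => Rle_trans _ _ _ (lip1 _ _ _ _ H _ _ _ _) (Hstep n s))) as I.
    unfold px in B1. cbn [pic fst] in B1.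
    pose proof (Rabs_triang (limX f1 f2 x0 y0 t - (x0 + RInt (fun s : R => f1 (fst (pic f1 f2 x0 y0 n) s) (snd (pic f1 f2 x0 y0 n) s)) 0 t))
         (RInt (fun s : R => f1 (fst (pic f1 f2 x0 y0 n) s) (snd (pic f1 f2 x0 y0 n) s)) 0 t -
          RInt (fun s : R => f1 (limX f1 f2 x0 y0 s) (limY f1 f2 x0 y0 s)) 0 t)).
    pose proof (Rle_abs (limX f1 f2 x0 y0 t - (x0 + RInt (fun s : R => f1 (limX f1 f2 x0 y0 s) (limY f1 f2 x0 y0 s)) 0 t))).
    simpl pow in B1.
    replace (L * (4 * C * (/ 2) ^ n) * exp (4 * L * Rabs t) / (4 * L)) with (C * (/2) ^ n * exp (4 * L * Rabs t)) in I by (field; lra).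
    match type of H0 with Rabs ?a <= _ => replace a with (limX f1 f2 x0 y0 t - (x0 + RInt (fun s : R => f1 (limX f1 f2 x0 y0 s) (limY f1 f2 x0 y0 s)) 0 t)) in H0 by ring end.
    lra.
  - pose proof (int_step (fun s : R => f1 (fst (pic f1 f2 x0 y0 n) s) (snd (pic f1 f2 x0 y0 n) s))
                          (fun s : R => f1 (limX f1 f2 x0 y0 s) (limY f1 f2 x0 y0 s))
         L _ (4 * L) t ltac:(lra) (Hq n) ltac:(lra) (pic_cont1 f1 f2 L M x0 y0 H n) (lim_cont1 f1 f2 L M x0 y0 H)
       (fun s => Rle_trans _ _ _ (lip1 _ _ _ _ H _ _ _ _) (Hstep n s))) as I.
    unfold px in B1. cbn [pic fst] in B1.
    pose proof (Rabs_triang (limX f1 f2 x0 y0 t - (x0 + RInt (fun s : R => f1 (fst (pic f1 f2 x0 y0 n) s) (snd (pic f1 f2 x0 y0 n) s)) 0 t))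
         (RInt (fun s : R => f1 (fst (pic f1 f2 x0 y0 n) s) (snd (pic f1 f2 x0 y0 n) s)) 0 t -
          RInt (fun s : R => f1 (limX f1 f2 x0 y0 s) (limY f1 f2 x0 y0 s)) 0 t)).
    pose proof (Rle_abs (- (limX f1 f2 x0 y0 t - (x0 + RInt (fun s : R => f1 (limX f1 f2 x0 y0 s) (limY f1 f2 x0 y0 s)) 0 t)))).
    rewrite Rabs_Ropp in H1.
    simpl pow in B1.
    replace (L * (4 * C * (/ 2) ^ n) * exp (4 * L * Rabs t) / (4 * L)) with (C * (/2) ^ n * exp (4 * L * Rabs t)) in I by (field; lra).
    match type of H0 with Rabs ?a <= _ => replace a with (limX f1 f2 x0 y0 t - (x0 + RInt (fun s : R => f1 (limX f1 f2 x0 y0 s) (limY f1 f2 x0 y0 s)) 0 t)) in H0 by ring end.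
    lra.
  - pose proof (int_step (fun s : R => f2 (fst (pic f1 f2 x0 y0 n) s) (snd (pic f1 f2 x0 y0 n) s))
                          (fun s : R => f2 (limX f1 f2 x0 y0 s) (limY f1 f2 x0 y0 s))
         L _ (4 * L) t ltac:(lra) (Hq n) ltac:(lra) (pic_cont2 f1 f2 L M x0 y0 H n) (lim_cont2 f1 f2 L M x0 y0 H)
       (fun s => Rle_trans _ _ _ (lip2 _ _ _ _ H _ _ _ _) (Hstep n s))) as I.
    unfold py in B2. cbn [pic snd] in B2.
    pose proof (Rabs_triang (limY f1 f2 x0 y0 t - (y0 + RInt (fun s : R => f2 (fst (pic f1 f2 x0 y0 n) s) (snd (pic f1 f2 x0 y0 n) s)) 0 t))
         (RInt (fun s : R => f2 (fst (pic f1 f2 x0 y0 n) s) (snd (pic f1 f2 x0 y0 n) s)) 0 t -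
          RInt (fun s : R => f2 (limX f1 f2 x0 y0 s) (limY f1 f2 x0 y0 s)) 0 t)).
    pose proof (Rle_abs (limY f1 f2 x0 y0 t - (y0 + RInt (fun s : R => f2 (limX f1 f2 x0 y0 s) (limY f1 f2 x0 y0 s)) 0 t))).
    simpl pow in B2.
    replace (L * (4 * C * (/ 2) ^ n) * exp (4 * L * Rabs t) / (4 * L)) with (C * (/2) ^ n * exp (4 * L * Rabs t)) in I by (field; lra).
    match type of H0 with Rabs ?a <= _ => replace a with (limY f1 f2 x0 y0 t - (y0 + RInt (fun s : R => f2 (limX f1 f2 x0 y0 s) (limY f1 f2 x0 y0 s)) 0 t)) in H0 by ring end.
    lra.
  - pose proof (int_step (fun s : R => f2 (fst (pic f1 f2 x0 y0 n) s) (snd (pic f1 f2 x0 y0 n) s))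
                          (fun s : R => f2 (limX f1 f2 x0 y0 s) (limY f1 f2 x0 y0 s))
         L _ (4 * L) t ltac:(lra) (Hq n) ltac:(lra) (pic_cont2 f1 f2 L M x0 y0 H n) (lim_cont2 f1 f2 L M x0 y0 H)
       (fun s => Rle_trans _ _ _ (lip2 _ _ _ _ H _ _ _ _) (Hstep n s))) as I.
    unfold py in B2. cbn [pic snd] in B2.
    pose proof (Rabs_triang (limY f1 f2 x0 y0 t - (y0 + RInt (fun s : R => f2 (fst (pic f1 f2 x0 y0 n) s) (snd (pic f1 f2 x0 y0 n) s)) 0 t))
         (RInt (fun s : R => f2 (fst (pic f1 f2 x0 y0 n) s) (snd (pic f1 f2 x0 y0 n) s)) 0 t -
          RInt (fun s : R => f2 (limX f1 f2 x0 y0 s) (limY f1 f2 x0 y0 s)) 0 t)).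
    pose proof (Rle_abs (- (limY f1 f2 x0 y0 t - (y0 + RInt (fun s : R => f2 (limX f1 f2 x0 y0 s) (limY f1 f2 x0 y0 s)) 0 t)))).
    rewrite Rabs_Ropp in H1.
    simpl pow in B2.
    replace (L * (4 * C * (/ 2) ^ n) * exp (4 * L * Rabs t) / (4 * L)) with (C * (/2) ^ n * exp (4 * L * Rabs t)) in I by (field; lra).
    match type of H0 with Rabs ?a <= _ => replace a with (limY f1 f2 x0 y0 t - (y0 + RInt (fun s : R => f2 (limX f1 f2 x0 y0 s) (limY f1 f2 x0 y0 s)) 0 t)) in H0 by ring end.
    lra.
Qed.

Lemma int_derive (g : R -> R) c t : (forall x, continuous g x) ->
  is_derive (fun t => c + RInt g 0 t) t (g t).
Proof.
  intros Hg. replace (g t) with (0 + g t) by ring.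
  apply (is_derive_plus (fun _ => c) (fun t => RInt g 0 t)).
  apply (is_derive_const (K:=R_AbsRing) (V:=R_NormedModule)).
  apply (is_derive_RInt (V:=R_CompleteNormedModule) g (fun t => RInt g 0 t) 0 t).
  - apply filter_forall. intros b. apply RInt_correct. apply cont_ex_RInt; auto.
  - auto.
Qed.

Theorem picard f1 f2 L M x0 y0 : PicH f1 f2 L M ->
  exists X Y : R -> R, X 0 = x0 /\ Y 0 = y0 /\
    forall t, is_derive X t (f1 (X t) (Y t)) /\ is_derive Y t (f2 (X t) (Y t)).
Proof.
  intros H. exists (limX f1 f2 x0 y0), (limY f1 f2 x0 y0).
  split; [|split].
  - rewrite (proj1 (lim_int f1 f2 L M x0 y0 H 0)). rewrite RInt_point. change (x0 + 0 = x0). ring.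
  - rewrite (proj2 (lim_int f1 f2 L M x0 y0 H 0)). rewrite RInt_point. change (y0 + 0 = y0). ring.
  - intros t. split.
    + apply (is_derive_ext (fun t => x0 + RInt (fun s : R => f1 (limX f1 f2 x0 y0 s) (limY f1 f2 x0 y0 s)) 0 t)).
      intros s. symmetry. apply (proj1 (lim_int f1 f2 L M x0 y0 H s)).
      apply (int_derive (fun s : R => f1 (limX f1 f2 x0 y0 s) (limY f1 f2 x0 y0 s))). apply (lim_cont1 f1 f2 L M x0 y0 H).
    + apply (is_derive_ext (fun t => y0 + RInt (fun s : R => f2 (limX f1 f2 x0 y0 s) (limY f1 f2 x0 y0 s)) 0 t)).
      intros s. symmetry. apply (proj2 (lim_int f1 f2 L M x0 y0 H s)).
      apply (int_derive (fun s : R => f2 (limX f1 f2 x0 y0 s) (limY f1 f2 x0 y0 s))). apply (lim_cont2 f1 f2 L M x0 y0 H).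
Qed.

Definition RC (f : R -> R) := filterlim f (at_right 0) (locally (f 0)).

Lemma RC_plus f g : RC f -> RC g -> RC (fun t => f t + g t).
Proof.
  intros Hf Hg. unfold RC.
  apply (filterlim_comp_2 f g Rplus Hf Hg).
  apply (filterlim_plus (K:=R_AbsRing) (V:=R_NormedModule) (f 0) (g 0)).
Qed.

Lemma RC_mult f g : RC f -> RC g -> RC (fun t => f t * g t).
Proof.
  intros Hf Hg. unfold RC.
  apply (filterlim_comp_2 f g Rmult Hf Hg).
  apply (filterlim_mult (K:=R_AbsRing) (f 0) (g 0)).
Qed.

Lemma RC_comp f g : RC f -> continuous g (f 0) -> RC (fun t => g (f t)).
Proof.
  intros Hf Hg. unfold RC. eapply filterlim_comp. apply Hf. apply Hg.
Qed.

Lemma RC_const c : RC (fun _ => c).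
Proof. unfold RC. apply filterlim_const. Qed.

Lemma RC_of_cont f : continuous f 0 -> RC f.
Proof.
  intros H. unfold RC. intros P HP. apply H in HP. unfold filtermap in *.
  destruct HP as [d Hd]. exists d. intros y Hy _. apply Hd. auto.
Qed.

Lemma RC_of_quot (f : R -> R) (l : R) : filterlim (fun t => (f t - f 0) / t) (at_right 0) (locally l) -> RC f.
Proof.
  intros H. unfold RC. apply filterlim_locally. intros eps.
  pose proof (proj1 (filterlim_locally (F:=at_right 0) (fun t => (f t - f 0) / t) l) H) as H1. specialize (H1 (mkposreal 1 Rlt_0_1)).
  destruct H1 as [d Hd].
  assert (Hd2 : 0 < Rmin d (eps / (Rabs l + 1))).
  { apply Rmin_pos. apply cond_pos. apply Rdiv_lt_0_compat. apply cond_pos. pose proof (Rabs_pos l); lra. }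
  exists (mkposreal _ Hd2). intros t Ht Htp. simpl in Ht.
  rewrite ball_R in Ht |- *. rewrite Rminus_0_r in Ht. rewrite Rabs_right in Ht by lra.
  assert (Hb : ball 0 d t). { rewrite ball_R, Rminus_0_r, Rabs_right by lra. pose proof (Rmin_l d (eps / (Rabs l + 1))). lra. }
  specialize (Hd t Hb Htp). rewrite ball_R in Hd. simpl in Hd.
  replace (f t - f 0) with (t * ((f t - f 0) / t)) by (field; lra).
  rewrite Rabs_mult, (Rabs_right t) by lra.
  assert (Rabs ((f t - f 0) / t) <= Rabs l + 1).
  { pose proof (Rabs_triang_inv ((f t - f 0) / t) l). lra. }
  pose proof (Rmin_r d (eps / (Rabs l + 1))).
  assert (t * (Rabs l + 1) < eps).
  { apply Rlt_le_trans with (eps / (Rabs l + 1) * (Rabs l + 1)).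
    apply Rmult_lt_compat_r. pose proof (Rabs_pos l); lra. lra.
    right; field. pose proof (Rabs_pos l); lra. }
  pose proof (Rabs_pos ((f t - f 0) / t)). nra.
Qed.

Lemma quot_of_derive f l : is_derive f 0 l -> filterlim (fun t => (f t - f 0) / t) (at_right 0) (locally l).
Proof.
  intros H. apply is_derive_Reals in H. apply filterlim_locally. intros eps.
  destruct (H eps (cond_pos eps)) as [d Hd]. exists d. intros t Ht Htp.
  rewrite ball_R in *. rewrite Rminus_0_r in Ht.
  specialize (Hd t ltac:(lra) Ht). rewrite Rplus_0_l in Hd. auto.
Qed.

Lemma decr_right (W dW : R -> R) T : 0 <= T ->
  (forall s, 0 < s <= T -> is_derive W s (dW s)) -> (forall s, 0 < s <= T -> dW s <= 0) ->
  RC W -> W T <= W 0.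
Proof.
  intros HT Hd Hneg HR.
  assert (Hstep : forall t0, 0 < t0 <= T -> W T <= W t0).
  { intros t0 Ht0. destruct (MVT_gen W t0 T dW) as [c [Hc1 Hc2]].
    - intros x Hx. apply Hd. rewrite Rmin_left, Rmax_right in Hx by lra. lra.
    - intros x Hx. apply continuity_pt_filterlim.
      apply (ex_derive_continuous (K:=R_AbsRing) (V:=R_NormedModule)). eexists. apply Hd.
      rewrite Rmin_left, Rmax_right in Hx by lra. lra.
    - rewrite Rmin_left, Rmax_right in Hc1 by lra.
      assert (dW c <= 0) by (apply Hneg; lra).
      assert (dW c * (T - t0) <= 0) by (apply Rmult_le_0_r; lra). lra. }
  destruct (Req_dec T 0). subst; lra.
  destruct (Rle_dec (W T) (W 0)) as [h|h]; auto. exfalso.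
  assert (He : 0 < W T - W 0) by lra.
  unfold RC in HR. pose proof (proj1 (filterlim_locally (F:=at_right 0) W (W 0)) HR) as HR1. destruct (HR1 (mkposreal _ He)) as [d Hd'].
  set (t0 := Rmin (d / 2) T).
  assert (Ht0 : 0 < t0 <= T). { unfold t0. split. apply Rmin_pos. pose proof (cond_pos d); lra. lra. apply Rmin_r. }
  assert (Hb : ball 0 d t0).
  { rewrite ball_R, Rminus_0_r, Rabs_right by lra. assert (t0 <= d / 2) by (unfold t0; apply Rmin_l). pose proof (cond_pos d). lra. }
  specialize (Hd' t0 Hb ltac:(lra)). rewrite ball_R in Hd'. simpl in Hd'.
  pose proof (Rle_abs (W t0 - W 0)). pose proof (Hstep t0 Ht0). lra.
Qed.

Definition SL := list ((R -> R) * (R -> R)).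
Fixpoint sev (l : SL) (a b : R) : R :=
  match l with nil => 0 | p :: l => fst p a * snd p b + sev l a b end.

Definition Lop (F : SL) (l : SL) : SL :=
  flat_map (fun p => (Derive (fst p), fun v => snd p v * v) ::
     map (fun q => (fun a => fst p a * fst q a, fun v => Derive (snd p) v * snd q v)) F) l.

Lemma sev_app l1 l2 a b : sev (l1 ++ l2) a b = sev l1 a b + sev l2 a b.
Proof. induction l1; simpl. ring. rewrite IHl1. ring. Qed.

Lemma sev_map (F : SL) al be a b :
  sev (map (fun q => (fun a => al a * fst q a, fun v => be v * snd q v)) F) a b = al a * be b * sev F a b.
Proof. induction F; simpl. ring. rewrite IHF. ring. Qed.

Definition SmoothL (U1 U2 : R -> Prop) (l : SL) := List.Forall (fun p => Smooth U1 (fst p) /\ Smooth U2 (snd p)) l.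

Lemma Lop_smooth U1 U2 F l : open U1 -> open U2 -> SmoothL U1 U2 F -> SmoothL U1 U2 l -> SmoothL U1 U2 (Lop F l).
Proof.
  intros O1 O2 HF Hl. induction Hl as [|p l [Hp1 Hp2] Hl IH]; simpl.
  - constructor.
  - constructor.
    + simpl. split. apply Smooth_S; auto. apply Smooth_mult; auto. apply Smooth_id.
    + apply (proj2 (Forall_app _ _ _)). split. 2: exact IH.
      apply Forall_forall. intros q Hq. apply in_map_iff in Hq. destruct Hq as [q' [<- Hq']].
      unfold SmoothL in HF. rewrite Forall_forall in HF. destruct (HF q' Hq'). simpl. split.
      apply Smooth_mult; auto. apply Smooth_mult; auto. apply Smooth_S; auto.
Qed.

Lemma is_derive_eq (f : R -> R) t a b : is_derive f t a -> a = b -> is_derive f t b.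
Proof. intros H <-. auto. Qed.

Lemma sev_derive U1 U2 F l (x y : R -> R) t : SmoothL U1 U2 l -> U1 (x t) -> U2 (y t) ->
  is_derive x t (y t) -> is_derive y t (sev F (x t) (y t)) ->
  is_derive (fun s => sev l (x s) (y s)) t (sev (Lop F l) (x t) (y t)).
Proof.
  intros Hl H1 H2 Dx Dy. induction Hl as [|p l [Hp1 Hp2] Hl IH].
  - simpl. apply (is_derive_const (K:=R_AbsRing) (V:=R_NormedModule)).
  - assert (Ha : is_derive (fun s => fst p (x s)) t (y t * Derive (fst p) (x t))).
    { apply (is_derive_comp (fst p) x). apply (Smooth_is_derive U1); auto. auto. }
    assert (Hb : is_derive (fun s => snd p (y s)) t (sev F (x t) (y t) * Derive (snd p) (y t))).
    { apply (is_derive_comp (snd p) y). apply (Smooth_is_derive U2); auto. auto. }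
    pose proof (is_derive_mult _ _ _ _ _ Ha Hb ltac:(intros; apply Rmult_comm)) as Hab.
    pose proof (is_derive_plus _ _ _ _ _ Hab IH) as Hs.
    simpl. eapply is_derive_eq. exact Hs.
    unfold Lop. simpl. fold (Lop F l). rewrite sev_app, sev_map.
    unfold plus, mult; simpl.
    ring.
Qed.

Record Hyp (l tb : R) (h : R -> R) (m eps d0 : R) : Prop := {
  H_h : HypH l h m;
  H_tb : 0 < tb;
  H_eps : 0 <= eps;
  H_m : eps * Rabs d0 < m;
  H_small : l * (eps * (Rabs d0 / sqrt (Af l tb h (eps * Rabs d0)))) < 2 * r0 }.

Definition Bf l tb h eps d := / Af l tb h (eps * d).
Definition Pf l tb h eps d := eps / 2 * Derive (Af l tb h) (eps * d).
Definition F2 l tb h eps d v :=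
  - (l * v + d + Pf l tb h eps d * v ^ 2 + Gfun l eps v) * Bf l tb h eps d.
Definition F2list l tb h eps : SL :=
  (fun d => - Bf l tb h eps d, fun v => l * v) ::
  (fun d => - (d * Bf l tb h eps d), fun _ => 1) ::
  (fun d => - (Pf l tb h eps d * Bf l tb h eps d), fun v => v ^ 2) ::
  (fun d => - Bf l tb h eps d, Gfun l eps) :: nil.

Lemma F2_sev l tb h eps d v : sev (F2list l tb h eps) d v = F2 l tb h eps d v.
Proof. unfold F2list, F2. simpl. ring. Qed.

Definition U1 m eps := fun d => - m < eps * d.
Definition U2 l eps := fun v => l * (eps * v) < 2 * r0.

Lemma open_U1 m eps : open (U1 m eps).
Proof. unfold U1. apply open_lin_gt. Qed.
Lemma open_U2 l eps : open (U2 l eps).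
Proof.
  unfold U2. apply open_ext with (fun v => (l * eps) * v < 2 * r0). intros; split; intros; lra.
  apply open_lin_lt.
Qed.

Lemma F2list_smooth l tb h m eps d0 (H : Hyp l tb h m eps d0) :
  SmoothL (U1 m eps) (U2 l eps) (F2list l tb h eps).
Proof.
  pose proof (H_h _ _ _ _ _ _ H) as Hh. pose proof (H_tb _ _ _ _ _ _ H) as Htb.
  assert (O1 := open_U1 m eps). assert (O2 := open_U2 l eps).
  assert (HA : Smooth (U1 m eps) (fun d => Af l tb h (eps * d))).
  { apply (Smooth_comp _ (fun x => - m < x) (fun d => eps * d) (Af l tb h)); auto.
    apply (Af_smooth l tb h m Hh). apply Smooth_mult; auto. apply Smooth_const. apply Smooth_id. }
  assert (HB : Smooth (U1 m eps) (Bf l tb h eps)).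
  { unfold Bf. apply Smooth_inv; auto. intros x Hx. destruct (Af_pos l tb h m Hh (eps * x) Htb Hx). lra. }
  assert (HP : Smooth (U1 m eps) (Pf l tb h eps)).
  { unfold Pf. apply Smooth_mult; auto. apply Smooth_const.
    apply (Smooth_comp _ (fun x => - m < x) (fun d => eps * d) (Derive (Af l tb h))); auto.
    apply Smooth_S. apply (Af_smooth l tb h m Hh). apply Smooth_mult; auto. apply Smooth_const. apply Smooth_id. }
  assert (Hn : forall f, Smooth (U1 m eps) f -> Smooth (U1 m eps) (fun d => - f d)).
  { intros f Hf. apply Smooth_ext with (fun d => (-1) * f d); auto. intros; ring.
    apply Smooth_mult; auto. apply Smooth_const. }
  unfold F2list. repeat constructor; simpl.
  - apply Hn; auto.
  - apply Smooth_mult; auto. apply Smooth_const. apply Smooth_id.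
  - apply Hn. apply Smooth_mult; auto. apply Smooth_id.
  - apply Smooth_const.
  - apply Hn. apply Smooth_mult; auto.
  - apply Smooth_ext with (fun v => v * v); auto. intros; ring. apply Smooth_mult; auto; apply Smooth_id.
  - apply Hn; auto.
  - apply G_smooth.
Qed.

Lemma Rabs_le_inv (x b : R) : Rabs x <= b -> - b <= x <= b.
Proof. intros H. pose proof (Rle_abs x). pose proof (Rle_abs (- x)). rewrite Rabs_Ropp in H1. lra. Qed.

Lemma lipb (a : R -> R) U al : Smooth U a -> (forall x, Rabs x <= al -> U x) -> 0 <= al ->
  exists K B, 0 <= K /\ 0 <= B /\
    (forall x y, Rabs x <= al -> Rabs y <= al -> Rabs (a x - a y) <= K * Rabs (x - y)) /\
    (forall x, Rabs x <= al -> Rabs (a x) <= B).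
Proof.
  intros Ha HU Hal.
  assert (Hin : forall x, - al <= x <= al -> U x) by (intros x Hx; apply HU; apply Rabs_le; lra).
  assert (Hc : forall f, Ck 0 U f -> exists B, 0 <= B /\ forall x, - al <= x <= al -> Rabs (f x) <= B).
  { intros f Hf. destruct (continuity_ab_maj (fun x => Rabs (f x)) (- al) al) as [Mx [HM1 HM2]]. lra.
    intros c Hc. apply continuity_pt_filterlim. apply (continuous_comp f Rabs). apply Hf; auto.
    apply continuity_pt_filterlim. apply Rcontinuity_abs.
    exists (Rabs (f Mx)). split. apply Rabs_pos. auto. }
  destruct (Hc a (Ha O)) as [B [HB1 HB2]].
  destruct (Hc (Derive a) (proj2 (Ha 1%nat))) as [K [HK1 HK2]].
  exists K, B. repeat split; auto.
  - intros x y Hx Hy. apply Rabs_le_inv in Hx. apply Rabs_le_inv in Hy.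
    destruct (MVT_gen a y x (Derive a)) as [c [Hc1 Hc2]].
    + intros z Hz. apply (Smooth_is_derive U); auto. apply Hin.
      pose proof (Rmin_l y x). pose proof (Rmin_r y x). pose proof (Rmax_l y x). pose proof (Rmax_r y x).
      split. destruct (Rle_dec y x); [rewrite Rmin_left in Hz by lra|rewrite Rmin_right in Hz by lra]; lra.
      destruct (Rle_dec y x); [rewrite Rmax_right in Hz by lra|rewrite Rmax_left in Hz by lra]; lra.
    + intros z Hz. apply continuity_pt_filterlim. apply (Ha O). apply Hin.
      destruct (Rle_dec y x); [rewrite Rmin_left, Rmax_right in Hz by lra|rewrite Rmin_right, Rmax_left in Hz by lra]; lra.
    + rewrite Hc2. rewrite Rabs_mult. apply Rmult_le_compat_r. apply Rabs_pos. apply HK2.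
      destruct (Rle_dec y x); [rewrite Rmin_left, Rmax_right in Hc1 by lra|rewrite Rmin_right, Rmax_left in Hc1 by lra]; lra.
  - intros x Hx. apply HB2. apply Rabs_le_inv in Hx. lra.
Qed.

Definition cl D x := clamp (- D) D x.
Lemma cl_bound D x : 0 <= D -> Rabs (cl D x) <= D.
Proof. intros. unfold cl. apply Rabs_le. apply clamp_in. lra. Qed.
Lemma cl_id D x : Rabs x <= D -> cl D x = x.
Proof. intros. unfold cl. apply clamp_id. apply Rabs_le_inv; auto. Qed.
Lemma cl_lip D x y : Rabs (cl D x - cl D y) <= Rabs (x - y).
Proof. apply clamp_lip. Qed.

Lemma sev_lip V1 V2 Dx Dv (l : SL) : 0 <= Dx -> 0 <= Dv -> SmoothL V1 V2 l ->
  (forall x, Rabs x <= Dx -> V1 x) -> (forall v, Rabs v <= Dv -> V2 v) ->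
  exists L M, 0 <= L /\ 0 <= M /\
   (forall a b a' b', Rabs (sev l (cl Dx a) (cl Dv b) - sev l (cl Dx a') (cl Dv b')) <= L * (Rabs (a - a') + Rabs (b - b'))) /\
   (forall a b, Rabs (sev l (cl Dx a) (cl Dv b)) <= M).
Proof.
  intros HDx HDv Hl H1 H2. induction Hl as [|p l [Hp1 Hp2] Hl IH].
  - exists 0, 0. simpl. split; [lra|split; [lra|split]].
    + intros. rewrite Rminus_0_r, Rabs_R0. lra.
    + intros. rewrite Rabs_R0. lra.
  - destruct IH as [L [M [HL [HM [IL IM]]]]].
    destruct (lipb (fst p) V1 Dx Hp1 H1 HDx) as [Ka [Ba [HKa [HBa [La Ba']]]]].
    destruct (lipb (snd p) V2 Dv Hp2 H2 HDv) as [Kb [Bb [HKb [HBb [Lb Bb']]]]].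
    exists (L + Ba * Kb + Bb * Ka), (M + Ba * Bb). repeat split.
    + apply Rplus_le_le_0_compat. apply Rplus_le_le_0_compat; auto; apply Rmult_le_pos; auto. apply Rmult_le_pos; auto.
    + apply Rplus_le_le_0_compat; auto. apply Rmult_le_pos; auto.
    + intros a b a' b'. simpl.
      set (A := fst p (cl Dx a)). set (A' := fst p (cl Dx a')).
      set (B := snd p (cl Dv b)). set (B' := snd p (cl Dv b')).
      assert (HA : Rabs A <= Ba) by (apply Ba'; apply cl_bound; auto).
      assert (HB' : Rabs B' <= Bb) by (apply Bb'; apply cl_bound; auto).
      assert (DA : Rabs (A - A') <= Ka * Rabs (a - a')).
      { eapply Rle_trans. apply La; apply cl_bound; auto. apply Rmult_le_compat_l; auto. apply cl_lip. }
      assert (DB : Rabs (B - B') <= Kb * Rabs (b - b')).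
      { eapply Rle_trans. apply Lb; apply cl_bound; auto. apply Rmult_le_compat_l; auto. apply cl_lip. }
      specialize (IL a b a' b').
      replace (A * B + sev l (cl Dx a) (cl Dv b) - (A' * B' + sev l (cl Dx a') (cl Dv b'))) with
        (A * (B - B') + B' * (A - A') + (sev l (cl Dx a) (cl Dv b) - sev l (cl Dx a') (cl Dv b'))) by ring.
      eapply Rle_trans. apply Rabs_triang. eapply Rle_trans. apply Rplus_le_compat_r. apply Rabs_triang.
      rewrite !Rabs_mult.
      assert (Rabs A * Rabs (B - B') <= Ba * (Kb * Rabs (b - b'))).
      { apply Rmult_le_compat; auto; apply Rabs_pos. }
      assert (Rabs B' * Rabs (A - A') <= Bb * (Ka * Rabs (a - a'))).
      { apply Rmult_le_compat; auto; apply Rabs_pos. }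
      pose proof (Rabs_pos (a - a')). pose proof (Rabs_pos (b - b')).
      assert (0 <= Ba * Kb * Rabs (a - a')) by (repeat apply Rmult_le_pos; auto).
      assert (0 <= Bb * Ka * Rabs (b - b')) by (repeat apply Rmult_le_pos; auto).
      nra.
    + intros a b. simpl. eapply Rle_trans. apply Rabs_triang. rewrite Rabs_mult.
      assert (Rabs (fst p (cl Dx a)) * Rabs (snd p (cl Dv b)) <= Ba * Bb).
      { apply Rmult_le_compat; try apply Rabs_pos. apply Ba'; apply cl_bound; auto.
        apply Bb'; apply cl_bound; auto. }
      pose proof (IM a b). lra.
Qed.

Definition Vb l tb h eps d0 := Rabs d0 / sqrt (Af l tb h (eps * Rabs d0)).

Lemma RC_ext f g : (forall t, f t = g t) -> RC f -> RC g.
Proof.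
  intros E H. unfold RC in *. rewrite <- (E 0).
  apply filterlim_ext with f; auto.
Qed.

Lemma Af_deriv_correct l tb h m (Hh : HypH l h m) r : - m < r -> is_derive (Af l tb h) r (Derive (Af l tb h) r).
Proof. intros. apply Derive_correct. eexists. apply (Af_derive l tb h m Hh). auto. Qed.

Lemma U1_d0 l tb h m eps d0 (H : Hyp l tb h m eps d0) : U1 m eps d0.
Proof.
  unfold U1. pose proof (H_m _ _ _ _ _ _ H). pose proof (H_eps _ _ _ _ _ _ H).
  pose proof (Rle_abs (- d0)). rewrite Rabs_Ropp in H2. nra.
Qed.

Lemma energy l tb h m eps d0 (H : Hyp l tb h m eps d0) (x y : R -> R) T : 0 <= T ->
  x 0 = d0 -> y 0 = 0 -> RC x -> RC y ->
  (forall s, 0 < s <= T -> is_derive x s (y s) /\ is_derive y s (F2 l tb h eps (x s) (y s))) ->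
  (forall s, 0 <= s <= T -> U1 m eps (x s) /\ U2 l eps (y s)) ->
  Rabs (x T) <= Rabs d0 /\ Rabs (y T) <= Vb l tb h eps d0.
Proof.
  intros HT Hx0 Hy0 Rx Ry Hd HU.
  pose proof (H_h _ _ _ _ _ _ H) as Hh. pose proof (H_tb _ _ _ _ _ _ H) as Htb.
  pose proof (H_eps _ _ _ _ _ _ H) as Heps. pose proof (hl _ _ _ Hh) as Hl.
  set (E := fun s => Af l tb h (eps * x s) * (y s * y s) / 2 + x s * x s / 2).
  set (dE := fun s => - l * y s ^ 2 - y s * Gfun l eps (y s)).
  assert (HE : E T <= E 0).
  { apply (decr_right E dE T HT).
    - intros s Hs. destruct (Hd s Hs) as [Dx Dy]. destruct (HU s ltac:(lra)) as [U1s U2s].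
      unfold U1 in U1s.
      assert (DA : is_derive (fun s => Af l tb h (eps * x s)) s (eps * y s * Derive (Af l tb h) (eps * x s))).
      { apply (is_derive_comp (Af l tb h) (fun s => eps * x s)).
        apply (Af_deriv_correct l tb h m Hh); auto. apply is_derive_scal; auto. }
      pose proof (is_derive_mult _ _ _ _ _ Dy Dy ltac:(intros; apply Rmult_comm)) as Dyy.
      pose proof (is_derive_mult _ _ _ _ _ Dx Dx ltac:(intros; apply Rmult_comm)) as Dxx.
      pose proof (is_derive_mult _ _ _ _ _ DA Dyy ltac:(intros; apply Rmult_comm)) as D1.
      pose proof (is_derive_scal _ _ (/ 2) _ D1) as D1'.
      pose proof (is_derive_scal _ _ (/ 2) _ Dxx) as Dxx'.
      pose proof (is_derive_plus _ _ _ _ _ D1' Dxx') as DE.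
      unfold E. eapply is_derive_ext. 2: eapply is_derive_eq. 2: exact DE.
      + intros t. simpl. unfold plus, mult; simpl. unfold Rdiv. ring.
      + unfold dE, F2, Pf, Bf. unfold plus, mult; simpl.
        destruct (Af_pos l tb h m Hh (eps * x s) Htb U1s). field. lra.
    - intros s Hs. unfold dE. destruct (HU s ltac:(lra)) as [_ U2s]. apply energy_sign; auto.
    - unfold E. apply RC_plus.
      + apply (RC_ext (fun t => Af l tb h (eps * x t) * (y t * y t) * / 2)). intros; unfold Rdiv; ring.
        apply RC_mult. apply RC_mult.
        * apply (RC_comp x (fun a => Af l tb h (eps * a))). auto.
          apply (ex_derive_continuous (K:=R_AbsRing) (V:=R_NormedModule)). eexists.
          apply (is_derive_comp (Af l tb h) (fun a => eps * a)).
          apply (Af_deriv_correct l tb h m Hh). rewrite Hx0. apply (U1_d0 l tb h m eps d0 H).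
          apply is_derive_scal. apply (is_derive_id (K:=R_AbsRing)).
        * apply RC_mult; auto.
        * apply RC_const.
      + apply (RC_ext (fun t => x t * x t * / 2)). intros; unfold Rdiv; ring.
        apply RC_mult. apply RC_mult; auto. apply RC_const. }
  unfold E in HE. rewrite Hx0, Hy0 in HE.
  destruct (HU T ltac:(lra)) as [U1T U2T]. unfold U1 in U1T.
  destruct (Af_pos l tb h m Hh (eps * x T) Htb U1T) as [Ap1 Ap2].
  assert (Hyy : 0 <= y T * y T) by nra.
  assert (HxT : x T * x T <= d0 * d0) by nra.
  assert (HX : Rabs (x T) <= Rabs d0).
  { apply Rsqr_le_abs_0. unfold Rsqr. lra. }
  split; auto.
  set (a0 := Rabs d0) in *. set (A0 := Af l tb h (eps * a0)).
  assert (HA0 : A0 <= Af l tb h (eps * x T)).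
  { apply (Af_decr l tb h m Hh). auto. pose proof (Rle_abs (x T)). nra. }
  assert (HmA0 : - m < eps * a0).
  { pose proof (Rabs_pos d0). pose proof (hm _ _ _ Hh). fold a0 in H0. nra. }
  destruct (Af_pos l tb h m Hh (eps * a0) Htb HmA0) as [_ A0p]. fold A0 in A0p.
  assert (Hy2 : A0 * (y T * y T) <= a0 * a0).
  { assert (a0 * a0 = d0 * d0). { unfold a0. rewrite <- Rabs_mult. apply Rabs_right. nra. }
    nra. }
  unfold Vb. fold a0. fold A0.
  assert (Hs : 0 < sqrt A0) by (apply sqrt_lt_R0; auto).
  assert (Hss : sqrt A0 * sqrt A0 = A0) by (apply sqrt_sqrt; lra).
  assert (HV0 : 0 <= a0 / sqrt A0).
  { apply Rmult_le_pos. unfold a0; apply Rabs_pos. left; apply Rinv_0_lt_compat; auto. }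
  assert (HVV : a0 / sqrt A0 * (a0 / sqrt A0) = a0 * a0 / A0).
  { set (q := sqrt A0) in *. clearbody q. rewrite <- Hss. field. lra. }
  assert (Hyb : y T * y T <= a0 * a0 / A0).
  { apply (Rmult_le_reg_l A0). auto. replace (A0 * (a0 * a0 / A0)) with (a0 * a0) by (field; lra). lra. }
  assert (Habs : Rabs (y T) * Rabs (y T) = y T * y T).
  { rewrite <- Rabs_mult. apply Rabs_right. nra. }
  pose proof (Rabs_pos (y T)).
  set (Vv := a0 / sqrt A0) in *. clearbody Vv.
  nra.
Qed.

Lemma cont_eps (f : R -> R) t : continuous f t -> forall eps, 0 < eps ->
  exists d, 0 < d /\ forall s, Rabs (s - t) < d -> Rabs (f s - f t) < eps.
Proof.
  intros H eps He. pose proof (proj1 (filterlim_locally (F:=locally t) f (f t)) H (mkposreal eps He)) as H1.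
  destruct H1 as [d Hd]. exists d. split. apply cond_pos. intros s Hs. apply (Hd s). rewrite ball_R. auto.
Qed.

Lemma global_bound (X Y : R -> R) a b Dx Dv : a < Dx -> b < Dv ->
  (forall t, continuous X t) -> (forall t, continuous Y t) -> Rabs (X 0) <= a -> Rabs (Y 0) <= b ->
  (forall T, 0 <= T -> (forall s, 0 <= s <= T -> Rabs (X s) <= Dx /\ Rabs (Y s) <= Dv) ->
     Rabs (X T) <= a /\ Rabs (Y T) <= b) ->
  forall T, 0 <= T -> Rabs (X T) <= a /\ Rabs (Y T) <= b.
Proof.
  intros Ha Hb CX CY HX0 HY0 Hen T1 HT1.
  destruct (Classical_Prop.classic (Rabs (X T1) <= a /\ Rabs (Y T1) <= b)) as [ok|nok]; auto. exfalso.
  set (Es := fun tau => 0 <= tau /\ forall s, 0 <= s <= tau -> Rabs (X s) <= a /\ Rabs (Y s) <= b).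
  assert (Hbd : forall tau, Es tau -> tau <= T1).
  { intros tau [H0 H1]. destruct (Rle_dec tau T1); auto. exfalso. apply nok. apply H1. lra. }
  assert (E0 : Es 0). { split. lra. intros s Hs. replace s with 0 by lra. auto. }
  destruct (completeness Es) as [tau [Hub Hlub]].
  { exists T1. intros x Hx. apply Hbd; auto. }
  { exists 0; auto. }
  assert (Htau0 : 0 <= tau) by (apply Hub; auto).
  assert (A : forall s, 0 <= s < tau -> Rabs (X s) <= a /\ Rabs (Y s) <= b).
  { intros s Hs. destruct (Classical_Prop.classic (exists t, Es t /\ s < t)) as [[t [[_ Ht] Hst]]|Hn].
    - apply Ht. lra.
    - exfalso. assert (tau <= s). apply Hlub. intros t Ht. destruct (Rle_dec t s); auto.
      exfalso. apply Hn. exists t. split; auto. lra. lra. }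
  assert (Bx : forall (f : R -> R) c, continuous f tau -> (forall s, 0 <= s < tau -> Rabs (f s) <= c) -> 0 < tau -> Rabs (f tau) <= c).
  { intros f c Hf Hs Ht. destruct (Rle_dec (Rabs (f tau)) c) as [h|h]; auto. exfalso.
    destruct (cont_eps f tau Hf (Rabs (f tau) - c)) as [d [Hd1 Hd2]]. lra.
    set (s := Rmax 0 (tau - d / 2)).
    assert (0 <= s < tau). { unfold s. split. apply Rmax_l. apply Rmax_lub_lt; lra. }
    assert (Rabs (s - tau) < d). { unfold s. unfold Rmax. destruct Rle_dec; rewrite Rabs_left; lra. }
    specialize (Hd2 s H0). specialize (Hs s H).
    pose proof (Rabs_triang_inv (f tau) (f s)). rewrite Rabs_minus_sym in Hd2. lra. }
  assert (B : Rabs (X tau) <= a /\ Rabs (Y tau) <= b).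
  { destruct (Req_dec tau 0) as [e|e]. rewrite e; auto.
    split. apply Bx; auto. intros; apply A; auto. lra.
    apply Bx; auto. intros; apply A; auto. lra. }
  destruct (cont_eps X tau (CX tau) (Dx - a)) as [d1 [Hd1 Hd1']]. lra.
  destruct (cont_eps Y tau (CY tau) (Dv - b)) as [d2 [Hd2 Hd2']]. lra.
  set (rho := Rmin d1 d2).
  assert (Hrho : 0 < rho) by (apply Rmin_pos; auto).
  assert (Hin : Es (tau + rho / 2)).
  { split. lra. intros s Hs. apply Hen. lra. intros s' Hs'.
    destruct (Rlt_le_dec s' tau) as [h|h].
    - destruct (A s' ltac:(lra)). lra.
    - assert (Rabs (s' - tau) < d1). { rewrite Rabs_right by lra. pose proof (Rmin_l d1 d2). fold rho in H. lra. }
      assert (Rabs (s' - tau) < d2). { rewrite Rabs_right by lra. pose proof (Rmin_r d1 d2). fold rho in H0. lra. }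
      specialize (Hd1' s' H). specialize (Hd2' s' H0). destruct B.
      pose proof (Rabs_triang_inv (X s') (X tau)). pose proof (Rabs_triang_inv (Y s') (Y tau)). lra. }
  pose proof (Hub _ Hin). lra.
Qed.

Lemma Vb_nonneg l tb h m eps d0 (H : Hyp l tb h m eps d0) : 0 <= Vb l tb h eps d0.
Proof.
  unfold Vb. apply Rmult_le_pos. apply Rabs_pos.
  destruct (Req_dec (sqrt (Af l tb h (eps * Rabs d0))) 0) as [e|e]. rewrite e, Rinv_0. lra.
  left. apply Rinv_0_lt_compat. pose proof (sqrt_pos (Af l tb h (eps * Rabs d0))). lra.
Qed.

Lemma eta_exists l tb h m eps d0 (H : Hyp l tb h m eps d0) :
  exists eta, 0 < eta /\ (forall x, Rabs x <= Rabs d0 + eta -> U1 m eps x) /\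
                         (forall v, Rabs v <= Vb l tb h eps d0 + eta -> U2 l eps v).
Proof.
  pose proof (H_h _ _ _ _ _ _ H) as Hh. pose proof (H_eps _ _ _ _ _ _ H) as Heps.
  pose proof (hl _ _ _ Hh) as Hl. pose proof (H_m _ _ _ _ _ _ H) as Hm.
  pose proof (H_small _ _ _ _ _ _ H) as Hs. fold (Vb l tb h eps d0) in Hs.
  set (V := Vb l tb h eps d0) in *. set (a0 := Rabs d0) in *.
  set (e1 := (m - eps * a0) / (eps + 1)). set (e2 := (2 * r0 - l * (eps * V)) / (l * eps + 1)).
  assert (He1 : 0 < e1) by (unfold e1; apply Rdiv_lt_0_compat; lra).
  assert (He2 : 0 < e2) by (unfold e2; apply Rdiv_lt_0_compat; nra).
  exists (Rmin e1 e2). split. apply Rmin_pos; auto. split.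
  - intros x Hx. unfold U1. pose proof (Rmin_l e1 e2).
    assert (eps * e1 < m - eps * a0).
    { unfold e1. apply (Rmult_lt_reg_r (eps + 1)). lra. unfold Rdiv.
      replace (eps * ((m - eps * a0) * / (eps + 1)) * (eps + 1)) with (eps * (m - eps * a0)) by (field; lra). nra. }
    pose proof (Rle_abs (- x)). rewrite Rabs_Ropp in H2.
    assert (eps * (- x) <= eps * (a0 + Rmin e1 e2)) by (apply Rmult_le_compat_l; lra).
    assert (eps * Rmin e1 e2 <= eps * e1) by (apply Rmult_le_compat_l; lra). lra.
  - intros v Hv. unfold U2. pose proof (Rmin_r e1 e2).
    assert (l * eps * e2 < 2 * r0 - l * (eps * V)).
    { unfold e2. apply (Rmult_lt_reg_r (l * eps + 1)). nra. unfold Rdiv.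
      replace (l * eps * ((2 * r0 - l * (eps * V)) * / (l * eps + 1)) * (l * eps + 1)) with (l * eps * (2 * r0 - l * (eps * V))) by (field; nra).
      assert (0 < 2 * r0 - l * (eps * V)) by lra. nra. }
    pose proof (Rle_abs v).
    assert (l * eps * v <= l * eps * (V + Rmin e1 e2)) by (apply Rmult_le_compat_l; nra).
    assert (l * eps * Rmin e1 e2 <= l * eps * e2) by (apply Rmult_le_compat_l; nra). nra.
Qed.

Lemma construct l tb h m eps d0 (H : Hyp l tb h m eps d0) :
  exists X Y : R -> R, X 0 = d0 /\ Y 0 = 0 /\
    (forall t, continuous X t) /\ (forall t, continuous Y t) /\
    forall t, 0 <= t -> Rabs (X t) <= Rabs d0 /\ Rabs (Y t) <= Vb l tb h eps d0 /\
      is_derive X t (Y t) /\ is_derive Y t (F2 l tb h eps (X t) (Y t)).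
Proof.
  pose proof (Vb_nonneg l tb h m eps d0 H) as HV0.
  destruct (eta_exists l tb h m eps d0 H) as [eta [Heta [HU1 HU2]]].
  set (V := Vb l tb h eps d0) in *. set (a0 := Rabs d0) in *.
  set (Dx := a0 + eta). set (Dv := V + eta).
  assert (Ha0 : 0 <= a0) by apply Rabs_pos.
  destruct (sev_lip (U1 m eps) (U2 l eps) Dx Dv (F2list l tb h eps) ltac:(unfold Dx; lra) ltac:(unfold Dv; lra)
     (F2list_smooth l tb h m eps d0 H) HU1 HU2) as [L [M [HL [HM [Lip Bd]]]]].
  set (f1 := fun (a b : R) => cl Dv b).
  set (f2 := fun a b => sev (F2list l tb h eps) (cl Dx a) (cl Dv b)).
  assert (PH : PicH f1 f2 (L + 1) (M + Dv)).
  { constructor.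
    - lra.
    - unfold Dv; lra.
    - intros. unfold f1. eapply Rle_trans. apply cl_lip. pose proof (Rabs_pos (a - a')). pose proof (Rabs_pos (b - b')). nra.
    - intros. unfold f2. eapply Rle_trans. apply Lip. pose proof (Rabs_pos (a - a')). pose proof (Rabs_pos (b - b')). nra.
    - intros. unfold f1; cbv beta. pose proof (cl_bound Dv b ltac:(unfold Dv; lra)). lra.
    - intros. unfold f2; cbv beta. pose proof (Bd a b). unfold Dv in *. lra. }
  destruct (picard f1 f2 (L + 1) (M + Dv) d0 0 PH) as [X [Y [X0 [Y0 HD]]]].
  assert (CX : forall t, continuous X t).
  { intros t. apply (ex_derive_continuous (K:=R_AbsRing) (V:=R_NormedModule)). eexists. apply (HD t). }
  assert (CY : forall t, continuous Y t).
  { intros t. apply (ex_derive_continuous (K:=R_AbsRing) (V:=R_NormedModule)). eexists. apply (HD t). }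
  assert (Hin : forall t, Rabs (X t) <= Dx -> Rabs (Y t) <= Dv ->
             is_derive X t (Y t) /\ is_derive Y t (F2 l tb h eps (X t) (Y t))).
  { intros t Hx Hy. destruct (HD t) as [D1 D2]. unfold f1, f2 in *.
    rewrite (cl_id Dv (Y t) Hy) in D1. rewrite (cl_id Dv (Y t) Hy), (cl_id Dx (X t) Hx), F2_sev in D2. auto. }
  assert (GB : forall T, 0 <= T -> Rabs (X T) <= a0 /\ Rabs (Y T) <= V).
  { apply (global_bound X Y a0 V Dx Dv); auto. unfold Dx; lra. unfold Dv; lra.
    rewrite X0. unfold a0; lra. rewrite Y0, Rabs_R0. auto.
    intros T HT Hbox. apply (energy l tb h m eps d0 H X Y T HT X0 Y0).
    - apply RC_of_cont. auto.
    - apply RC_of_cont. auto.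
    - intros s Hs. destruct (Hbox s ltac:(lra)). apply Hin; auto.
    - intros s Hs. destruct (Hbox s Hs). split; [apply HU1|apply HU2]; auto. }
  exists X, Y. split; [auto|split; [auto|split; [auto|split; [auto|]]]].
  intros t Ht. destruct (GB t Ht). split; [auto|split; [auto|]].
  apply Hin; unfold Dx, Dv; lra.
Qed.

Lemma F2_lip l tb h m eps d0 (H : Hyp l tb h m eps d0) : exists L, 0 <= L /\
  forall a b a' b', Rabs a <= Rabs d0 -> Rabs a' <= Rabs d0 -> Rabs b <= Vb l tb h eps d0 -> Rabs b' <= Vb l tb h eps d0 ->
   Rabs (F2 l tb h eps a b - F2 l tb h eps a' b') <= L * (Rabs (a - a') + Rabs (b - b')).
Proof.
  pose proof (Vb_nonneg l tb h m eps d0 H) as HV0.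
  destruct (eta_exists l tb h m eps d0 H) as [eta [Heta [HU1 HU2]]].
  assert (HU1' : forall x, Rabs x <= Rabs d0 -> U1 m eps x) by (intros; apply HU1; lra).
  assert (HU2' : forall x, Rabs x <= Vb l tb h eps d0 -> U2 l eps x) by (intros; apply HU2; lra).
  destruct (sev_lip (U1 m eps) (U2 l eps) (Rabs d0) (Vb l tb h eps d0) (F2list l tb h eps) (Rabs_pos d0) HV0
     (F2list_smooth l tb h m eps d0 H) HU1' HU2') as [L [M [HL [HM [Lip Bd]]]]].
  exists L. split; auto. intros a b a' b' Ha Ha' Hb Hb'.
  specialize (Lip a b a' b'). rewrite !cl_id, !F2_sev in Lip by auto. auto.
Qed.

Lemma Rabs_sq (p : R) : Rabs p * Rabs p = p * p.
Proof. rewrite <- Rabs_mult. apply Rabs_right. nra. Qed.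

Lemma key_ineq p q r L c : 0 <= L -> c = 1 + 3 * L -> Rabs r <= L * (Rabs p + Rabs q) ->
  - c * (p * p + q * q) + 2 * p * q + 2 * q * r <= 0.
Proof.
  intros HL Hc Hr. subst c.
  assert (H1 : 2 * p * q <= p * p + q * q) by (pose proof (pow2_ge_0 (p - q)); nra).
  assert (H2 : 2 * q * r <= 2 * Rabs q * Rabs r).
  { pose proof (Rle_abs (q * r)). rewrite Rabs_mult in H. lra. }
  assert (H3 : 2 * Rabs q * Rabs r <= 2 * Rabs q * (L * (Rabs p + Rabs q))).
  { apply Rmult_le_compat_l. pose proof (Rabs_pos q). lra. auto. }
  pose proof (Rabs_sq p). pose proof (Rabs_sq q). pose proof (Rabs_pos p). pose proof (Rabs_pos q).
  assert (H6 : 2 * Rabs q * Rabs p <= Rabs p * Rabs p + Rabs q * Rabs q) by (pose proof (pow2_ge_0 (Rabs p - Rabs q)); nra).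
  assert (H7 : L * (2 * Rabs q * Rabs p) <= L * (Rabs p * Rabs p + Rabs q * Rabs q)) by (apply Rmult_le_compat_l; lra).
  nra.
Qed.

Lemma RC_minus f g : RC f -> RC g -> RC (fun t => f t - g t).
Proof.
  intros. apply (RC_ext (fun t => f t + (-1) * g t)). intros; ring.
  apply RC_plus; auto. apply RC_mult; auto. apply RC_const.
Qed.

Lemma uniq l tb h m eps d0 (H : Hyp l tb h m eps d0) (X Y x y : R -> R) :
  X 0 = d0 -> Y 0 = 0 -> (forall t, continuous X t) -> (forall t, continuous Y t) ->
  (forall t, 0 <= t -> Rabs (X t) <= Rabs d0 /\ Rabs (Y t) <= Vb l tb h eps d0 /\
      is_derive X t (Y t) /\ is_derive Y t (F2 l tb h eps (X t) (Y t))) ->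
  x 0 = d0 -> y 0 = 0 -> RC x -> RC y ->
  (forall s, 0 < s -> is_derive x s (y s) /\ is_derive y s (F2 l tb h eps (x s) (y s))) ->
  (forall s, 0 <= s -> U1 m eps (x s) /\ U2 l eps (y s)) ->
  forall T, 0 <= T -> x T = X T.
Proof.
  intros X0 Y0 CX CY HX x0 y0 Rx Ry Hd HU T HT.
  assert (Kx : forall t, 0 <= t -> Rabs (x t) <= Rabs d0 /\ Rabs (y t) <= Vb l tb h eps d0).
  { intros t Ht. apply (energy l tb h m eps d0 H x y t Ht x0 y0 Rx Ry).
    intros s Hs; apply Hd; lra. intros s Hs; apply HU; lra. }
  destruct (F2_lip l tb h m eps d0 H) as [L [HL Lip]].
  set (c := 1 + 3 * L).
  set (W := fun s => exp (- c * s) * ((x s - X s) * (x s - X s) + (y s - Y s) * (y s - Y s))).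
  set (dW := fun s => exp (- c * s) * (- c * ((x s - X s) * (x s - X s) + (y s - Y s) * (y s - Y s))
                + 2 * (x s - X s) * (y s - Y s) + 2 * (y s - Y s) * (F2 l tb h eps (x s) (y s) - F2 l tb h eps (X s) (Y s)))).
  assert (HW : W T <= W 0).
  { apply (decr_right W dW T HT).
    - intros s Hs. destruct (Hd s ltac:(lra)) as [Dx Dy]. destruct (HX s ltac:(lra)) as [_ [_ [DX DY]]].
      assert (De : is_derive (fun s => exp (- c * s)) s (- c * exp (- c * s))).
      { auto_derive. auto. ring. }
      pose proof (is_derive_minus _ _ _ _ _ Dx DX) as Dp.
      pose proof (is_derive_minus _ _ _ _ _ Dy DY) as Dq.
      pose proof (is_derive_mult _ _ _ _ _ Dp Dp ltac:(intros; apply Rmult_comm)) as Dpp.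
      pose proof (is_derive_mult _ _ _ _ _ Dq Dq ltac:(intros; apply Rmult_comm)) as Dqq.
      pose proof (is_derive_plus _ _ _ _ _ Dpp Dqq) as DZ.
      pose proof (is_derive_mult _ _ _ _ _ De DZ ltac:(intros; apply Rmult_comm)) as DW.
      unfold W. eapply is_derive_eq. eapply is_derive_ext. 2: exact DW.
      + intros t. simpl. unfold minus, opp, plus, mult; simpl. ring.
      + unfold dW. unfold minus, opp, plus, mult; simpl. ring.
    - intros s Hs. unfold dW. destruct (Kx s ltac:(lra)) as [A1 A2]. destruct (HX s ltac:(lra)) as [B1 [B2 _]].
      pose proof (Lip _ _ _ _ A1 B1 A2 B2).
      pose proof (key_ineq (x s - X s) (y s - Y s) (F2 l tb h eps (x s) (y s) - F2 l tb h eps (X s) (Y s)) L c HL eq_refl H0).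
      pose proof (exp_pos (- c * s)).
      assert (Hr : - c * ((x s - X s) * (x s - X s) + (y s - Y s) * (y s - Y s)) + 2 * (x s - X s) * (y s - Y s) +
         2 * (y s - Y s) * (F2 l tb h eps (x s) (y s) - F2 l tb h eps (X s) (Y s)) <= 0) by lra.
      set (k := - c * ((x s - X s) * (x s - X s) + (y s - Y s) * (y s - Y s)) + 2 * (x s - X s) * (y s - Y s) +
         2 * (y s - Y s) * (F2 l tb h eps (x s) (y s) - F2 l tb h eps (X s) (Y s))) in *.
      replace (- c * ((x s - X s) * (x s - X s) + (y s - Y s) * (y s - Y s)) + 2 * (x s - X s) * (y s - Y s) +
         2 * (y s - Y s) * (F2 l tb h eps (x s) (y s) - F2 l tb h eps (X s) (Y s))) with k by reflexivity.
      apply Rmult_le_0_l; lra.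
    - unfold W. apply RC_mult.
      + apply RC_of_cont. apply (continuous_comp (fun s => - c * s) exp).
        apply (continuous_mult (fun _ => - c) (fun s => s)). apply continuous_const. apply continuous_id.
        apply continuity_pt_filterlim. apply derivable_continuous_pt. apply derivable_pt_exp.
      + apply RC_plus; apply RC_mult; apply RC_minus; auto; apply RC_of_cont; auto. }
  unfold W in HW. rewrite x0, y0, X0, Y0 in HW.
  replace ((d0 - d0) * (d0 - d0) + (0 - 0) * (0 - 0)) with 0 in HW by ring. rewrite Rmult_0_r in HW.
  pose proof (exp_pos (- c * T)).
  assert (HZ : (x T - X T) * (x T - X T) + (y T - Y T) * (y T - Y T) <= 0).
  { destruct (Rle_dec ((x T - X T) * (x T - X T) + (y T - Y T) * (y T - Y T)) 0); auto. exfalso.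
    assert (0 < exp (- c * T) * ((x T - X T) * (x T - X T) + (y T - Y T) * (y T - Y T))) by (apply Rmult_lt_0_compat; lra).
    lra. }
  assert ((x T - X T) * (x T - X T) = 0).
  { pose proof (Rle_0_sqr (x T - X T)). pose proof (Rle_0_sqr (y T - Y T)). unfold Rsqr in *. lra. }
  apply Rmult_integral in H1. lra.
Qed.

Lemma eq_F2 l tb h m eps d0 (H : Hyp l tb h m eps d0) a b c : U1 m eps a ->
  ((tau0 l tb h (eps * a)) ^ 2 * c + l * b + a
   + eps * (tau0 l tb h (eps * a) * tau0' l tb h (eps * a) + gamma l (eps * b)) * b ^ 2 = 0
  <-> c = F2 l tb h eps a b).
Proof.
  intros HU. unfold U1 in HU.
  pose proof (H_h _ _ _ _ _ _ H) as Hh. pose proof (H_tb _ _ _ _ _ _ H) as Htb.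
  rewrite (tau0_sq l tb h m Hh _ Htb HU).
  replace (eps * (tau0 l tb h (eps * a) * tau0' l tb h (eps * a) + gamma l (eps * b)) * b ^ 2) with
    (eps * (tau0 l tb h (eps * a) * tau0' l tb h (eps * a)) * b ^ 2 + eps * gamma l (eps * b) * b ^ 2) by ring.
  rewrite (tau0'_eq l tb h m Hh _ Htb HU), G_gamma.
  destruct (Af_pos l tb h m Hh (eps * a) Htb HU) as [_ Ap].
  unfold F2, Pf, Bf. split; intros E.
  - apply (Rmult_eq_reg_l (Af l tb h (eps * a))). 2: lra.
    field_simplify. 2: lra. lra.
  - rewrite E. field. lra.
Qed.

Lemma hc_cont' l h (Hl : 0 < l)
  (hcont : forall x, - l <= x <= l ->
     filterlim h (within (fun y => - l <= y <= l) (locally x)) (locally (h x))) x :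
  continuous (hc l h) x.
Proof.
  unfold hc.
  apply (filterlim_comp _ _ _ (clamp (- l) l) h (locally x)
     (within (fun y => - l <= y <= l) (locally (clamp (- l) l x)))).
  - intros P HP. unfold within in HP. apply clamp_cont in HP.
    unfold filtermap in *. eapply filter_imp; [|exact HP]. simpl. intros y Hy.
    apply Hy. apply clamp_in. lra.
  - apply hcont; auto. apply clamp_in; lra.
Qed.

Definition base_sl : SL := (fun a => a, fun _ => 1) :: nil.
Definition dfam l tb h eps (X Y : R -> R) (n : nat) (t : R) :=
  sev (Nat.iter n (Lop (F2list l tb h eps)) base_sl) (X t) (Y t).

Lemma iter_smooth l tb h m eps d0 (H : Hyp l tb h m eps d0) n :
  SmoothL (U1 m eps) (U2 l eps) (Nat.iter n (Lop (F2list l tb h eps)) base_sl).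
Proof.
  induction n; simpl.
  - repeat constructor; simpl. apply Smooth_id. apply Smooth_const.
  - apply Lop_smooth; auto. apply open_U1. apply open_U2. apply (F2list_smooth l tb h m eps d0 H).
Qed.

Lemma Rplus_deriv_of (f : R -> R) (g : R -> R) : (forall t, 0 <= t -> is_derive f t (g t)) -> is_Rplus_deriv f g.
Proof.
  intros H. split. intros t Ht. apply H. lra. apply quot_of_derive. apply H. lra.
Qed.

Theorem proposition4p9 (l tb : R) (h : R -> R) (eps d0 : R)
  (hl : 0 < l) (htb : 0 < tb)
  (hpos : forall x, - l <= x <= l -> 0 < h x)
  (hcont : forall x, - l <= x <= l ->
     filterlim h (within (fun y => - l <= y <= l) (locally x)) (locally (h x)))
  (heven : forall x, - l <= x <= l -> h (- x) = h x)
  (heps : 0 <= eps)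
  (hinf : Rbar_lt (Finite (eps * Rabs d0))
            (Glb_Rbar (fun y => exists x, - l <= x <= l /\ y = h x)))
  (hsmall : eps * Rabs d0 < tau0 l tb h (eps * Rabs d0) * (2 * r0 / l)) :
  exists delta : R -> R,
    is_global_solution l tb h eps d0 delta /\
    forall delta' : R -> R, is_global_solution l tb h eps d0 delta' ->
      forall t, 0 <= t -> delta' t = delta t.
Proof.
  destruct (continuity_ab_min (hc l h) (- l) l ltac:(lra)) as [xm [Hxm1 Hxm2]].
  { intros c Hc. apply continuity_pt_filterlim. apply hc_cont'; auto. }
  rewrite hc_eq in Hxm1 by auto.
  set (m := h xm).
  assert (Hmh : forall x, - l <= x <= l -> m <= h x).
  { intros x Hx. specialize (Hxm1 x Hx). rewrite hc_eq in Hxm1 by auto. auto. }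
  assert (Hh : HypH l h m).
  { constructor; auto. apply hpos; auto. }
  assert (Hm : eps * Rabs d0 < m).
  { destruct (Glb_Rbar_correct (fun y => exists x, - l <= x <= l /\ y = h x)) as [Hlb _].
    assert (Hle : Rbar_le (Glb_Rbar (fun y => exists x, - l <= x <= l /\ y = h x)) (Finite m)).
    { apply Hlb. exists xm. split; auto. }
    pose proof (Rbar_lt_le_trans _ _ _ hinf Hle). simpl in H. auto. }
  assert (Hm0 : - m < eps * Rabs d0).
  { pose proof (Rabs_pos d0). pose proof (hpos xm Hxm2). fold m in H0. nra. }
  assert (H : Hyp l tb h m eps d0).
  { constructor; auto.
    rewrite (tau0_eq l tb h m Hh _ Hm0) in hsmall.
    destruct (Af_pos l tb h m Hh (eps * Rabs d0) htb Hm0) as [_ Ap].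
    assert (Hs : 0 < sqrt (Af l tb h (eps * Rabs d0))) by (apply sqrt_lt_R0; auto).
    set (q := sqrt (Af l tb h (eps * Rabs d0))) in *.
    replace (l * (eps * (Rabs d0 / q))) with ((eps * Rabs d0) * (l / q)) by (field; lra).
    apply (Rmult_lt_compat_r (l / q)) in hsmall. 2: apply Rdiv_lt_0_compat; lra.
    replace (q * (2 * r0 / l) * (l / q)) with (2 * r0) in hsmall by (field; lra). auto. }
  destruct (eta_exists l tb h m eps d0 H) as [eta [Heta [HU1 HU2]]].
  destruct (construct l tb h m eps d0 H) as [X [Y [X0 [Y0 [CX [CY HX]]]]]].
  assert (HUt : forall t, 0 <= t -> U1 m eps (X t) /\ U2 l eps (Y t)).
  { intros t Ht. destruct (HX t Ht) as [A [B _]]. split. apply HU1; lra. apply HU2; lra. }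
  exists X. split.
  - split.
    + exists (dfam l tb h eps X Y). split.
      * intros t _. unfold dfam. simpl. ring.
      * intros n. apply Rplus_deriv_of. intros t Ht.
        destruct (HX t Ht) as [_ [_ [D1 D2]]]. destruct (HUt t Ht) as [U1t U2t].
        unfold dfam. simpl Nat.iter at 2.
        apply (sev_derive (U1 m eps) (U2 l eps)); auto.
        apply (iter_smooth l tb h m eps d0 H). rewrite F2_sev. auto.
    + exists Y, (fun t => F2 l tb h eps (X t) (Y t)). split; [|split; [|split; [|split]]].
      * apply Rplus_deriv_of. intros t Ht. apply (HX t Ht).
      * apply Rplus_deriv_of. intros t Ht. apply (HX t Ht).
      * auto.
      * auto.
      * intros t Ht. destruct (HUt t Ht) as [U1t U2t]. split; [|split].
        -- intros x Hx. pose proof (Hmh x Hx). unfold U1 in U1t. lra.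
        -- auto.
        -- apply (eq_F2 l tb h m eps d0 H); auto.
  - intros delta' [_ [d1 [d2 [Dd1 [Dd2 [E0 [E1 Heq]]]]]]] t Ht.
    assert (HU' : forall s, 0 <= s -> U1 m eps (delta' s) /\ U2 l eps (d1 s)).
    { intros s Hs. destruct (Heq s Hs) as [A [B _]]. split; auto.
      unfold U1. specialize (A xm Hxm2). fold m in A. lra. }
    apply (uniq l tb h m eps d0 H X Y delta' d1); auto.
    + apply (RC_of_quot _ (d1 0)). apply Dd1.
    + apply (RC_of_quot _ (d2 0)). apply Dd2.
    + intros s Hs. split. apply Dd1; auto.
      eapply is_derive_eq. apply Dd2; auto.
      destruct (Heq s ltac:(lra)) as [_ [_ E]]. destruct (HU' s ltac:(lra)).
      apply (eq_F2 l tb h m eps d0 H); auto.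
Qed.
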